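(* Let $A$ be a Lagrange tensor along $c$ with base point $t_0$ and fix $v\in E_{t_0}$. (a) The vector field $t\mapsto A_t^{-*}v$ is smooth on the set of regular points. If $t^*$ is a singular point, then $A_t^{-*}v$ has a smooth extension across $t=t^*$ if and only if $v$ is orthogonal to $\ker A_{t^*}$. (b) For $v\neq0$, the function $g_v$ extends continuously to all $t$ (with $g_v(t^* )=0$ at singular points $t^*$ with $v\not\perp\ker A_{t^*}$, where $\|A_t^{-*}v\|\to\infty$), and $g_v(t)>0$ if and only if $v$ is orthogonal to $\ker A_t$.
   Context: Setting: $(M^{n+1},g)$ is a Riemannian manifold and $c:I\to M$ a unit-speed geodesic on an interval $I$. For $t\in I$ let $E_t=\dot c(t)^\perp\subset T_{c(t)}M$ and let $R_t:E_t\to E_t$, $R_t(x)=R(x,\dot c(t))\dot c(t)$. For a vector field $X$ along $c$, $X'$ denotes $\nabla_{\dot c}X$. Fix a base point $t_0\in I$. A Jacobi tensor is a smooth family of linear maps $A_t:E_{t_0}\to E_t$ with $A_t''+R_tA_t=0$. It is a Lagrange tensor if $\ker A_{t_0}\cap\ker A'_{t_0}=0$ and $\langle A_t'v,A_tw\rangle=\langle A_tv,A_t'w\rangle$ for all $t$ and all $v,w\in E_{t_0}$. A point $t$ is regular if $A_t$ is invertible and singular otherwise. $A_t^*:E_t\to E_{t_0}$ is the adjoint of $A_t$ and $A_t^{-*}=(A_t^* )^{-1}$ (at regular $t$). For $0\ne v\in E_{t_0}$, $g_v(t)=\|v\|^2/\|A_t^{-*}v\|$ at regular $t$. *)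

(* Defs.v *)
(* classical reals.  Everything is expressed in a parallel
   orthonormal frame along the geodesic c. *)
From Stdlib Require Import Reals Lra List.
Open Scope R_scope.

Definition sumR (n : nat) (f : nat -> R) : R :=
  fold_right Rplus 0 (map f (seq 0 n)).

(* vectors of R^n and n x n matrices; only indices < n are meaningful *)
Definition Vec := nat -> R.
Definition Mat := nat -> nat -> R.

Definition mv (n : nat) (M : Mat) (x : Vec) : Vec :=
  fun i => sumR n (fun k => M i k * x k).
Definition mm (n : nat) (M N : Mat) : Mat :=
  fun i j => sumR n (fun k => M i k * N k j).
Definition tr (M : Mat) : Mat := fun i j => M j i.
Definition idm : Mat := fun i j => if Nat.eqb i j then 1 else 0.

Definition dot (n : nat) (x y : Vec) : R := sumR n (fun i => x i * y i).
Definition vnorm (n : nat) (x : Vec) : R := sqrt (dot n x x).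

Definition invertible (n : nat) (M : Mat) : Prop :=
  exists B : Mat, forall i j, (i < n)%nat -> (j < n)%nat ->
    mm n B M i j = idm i j /\ mm n M B i j = idm i j.

Definition in_ker (n : nat) (M : Mat) (x : Vec) : Prop :=
  forall i, (i < n)%nat -> mv n M x i = 0.

Definition perp_ker (n : nat) (M : Mat) (v : Vec) : Prop :=
  forall x, in_ker n M x -> dot n v x = 0.

(* w = M^{-*} v, i.e. M^* w = v (M^* = transpose in orthonormal frames) *)
Definition is_invstar (n : nat) (M : Mat) (v w : Vec) : Prop :=
  forall i, (i < n)%nat -> mv n (tr M) w i = v i.

Definition is_open_interval (I : R -> Prop) : Prop :=
  (forall x y z, I x -> I z -> x <= y <= z -> I y) /\
  (forall x, I x -> exists e, 0 < e /\ forall y, Rabs (y - x) < e -> I y).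

Definition smooth_on (D : R -> Prop) (f : R -> R) : Prop :=
  exists F : nat -> R -> R,
    (forall t, D t -> F O t = f t) /\
    (forall k t, D t -> derivable_pt_lim (F k) t (F (S k) t)).

(* Main.v *)
Require Import Defs.
From Stdlib Require Import Reals.
Open Scope R_scope.
From Stdlib Require Import Reals Lra Lia List.
Open Scope R_scope.

Lemma sumR_0 f : sumR 0 f = 0.
Proof. reflexivity. Qed.

Lemma sumR_S n f : sumR (S n) f = sumR n f + f n.
Proof.
  unfold sumR. rewrite seq_S, map_app, fold_right_app. simpl.
  generalize (map f (seq 0 n)). intro l. induction l; simpl; [ring|].
  rewrite IHl. ring.
Qed.

Lemma sumR_ext n f g : (forall k, (k < n)%nat -> f k = g k) -> sumR n f = sumR n g.
Proof.
  induction n; intros H; [reflexivity|]. rewrite !sumR_S. rewrite IHn.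
  - rewrite (H n) by lia. reflexivity.
  - intros; apply H; lia.
Qed.

Lemma sumR_plus n f g : sumR n (fun k => f k + g k) = sumR n f + sumR n g.
Proof. induction n; [rewrite ?sumR_0; ring|]. rewrite !sumR_S, IHn. ring. Qed.

Lemma sumR_opp n f : sumR n (fun k => - f k) = - sumR n f.
Proof. induction n; [rewrite ?sumR_0; ring|]. rewrite !sumR_S, IHn. ring. Qed.

Lemma sumR_scal n c f : sumR n (fun k => c * f k) = c * sumR n f.
Proof. induction n; [rewrite ?sumR_0; ring|]. rewrite !sumR_S, IHn. ring. Qed.

Lemma sumR_scalr n c f : sumR n (fun k => f k * c) = sumR n f * c.
Proof. induction n; [rewrite ?sumR_0; ring|]. rewrite !sumR_S, IHn. ring. Qed.

Lemma sumR_zero n f : (forall k, (k < n)%nat -> f k = 0) -> sumR n f = 0.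
Proof. intros H. rewrite (sumR_ext n f (fun _ => 0)) by auto. induction n; [reflexivity|].
  rewrite sumR_S, IHn. ring. intros; auto. Qed.

Lemma sumR_swap n m (f : nat -> nat -> R) :
  sumR n (fun i => sumR m (fun j => f i j)) = sumR m (fun j => sumR n (fun i => f i j)).
Proof.
  induction n.
  - rewrite sumR_0, sumR_zero; [reflexivity|]. intros; reflexivity.
  - rewrite sumR_S, IHn. rewrite <- sumR_plus. apply sumR_ext. intros. rewrite sumR_S. reflexivity.
Qed.

Lemma sumR_nonneg n f : (forall k, (k < n)%nat -> 0 <= f k) -> 0 <= sumR n f.
Proof. induction n; intros H; [rewrite ?sumR_0; lra|]. rewrite sumR_S.
  assert (0 <= f n) by (apply H; lia). assert (0 <= sumR n f) by (apply IHn; intros; apply H; lia). lra. Qed.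

Lemma sumR_le n f g : (forall k, (k < n)%nat -> f k <= g k) -> sumR n f <= sumR n g.
Proof. induction n; intros H; [rewrite ?sumR_0; lra|]. rewrite !sumR_S.
  assert (f n <= g n) by (apply H; lia). assert (sumR n f <= sumR n g) by (apply IHn; intros; apply H; lia). lra. Qed.

Lemma sumR_single n f j : (j < n)%nat -> (forall k, (k < n)%nat -> k <> j -> f k = 0) -> sumR n f = f j.
Proof.
  induction n; intros Hj H; [lia|]. rewrite sumR_S.
  destruct (Nat.eq_dec j n) as [->|Hne].
  - rewrite sumR_zero. ring. intros; apply H; lia.
  - rewrite IHn by (try lia; intros; apply H; lia). rewrite (H n) by lia. ring.
Qed.

Lemma sumR_term_le n f j : (j < n)%nat -> (forall k, (k < n)%nat -> 0 <= f k) -> f j <= sumR n f.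
Proof.
  induction n; intros Hj H; [lia|]. rewrite sumR_S.
  destruct (Nat.eq_dec j n) as [->|Hne].
  - assert (0 <= sumR n f) by (apply sumR_nonneg; intros; apply H; lia). lra.
  - assert (f j <= sumR n f) by (apply IHn; [lia| intros; apply H; lia]).
    assert (0 <= f n) by (apply H; lia). lra.
Qed.

Lemma sumR_pos_zero n f : (forall k, (k < n)%nat -> 0 <= f k) -> sumR n f = 0 ->
  forall k, (k < n)%nat -> f k = 0.
Proof.
  intros H Hs k Hk. assert (f k <= sumR n f) by (apply sumR_term_le; auto).
  specialize (H k Hk). lra.
Qed.

Lemma idm_sum n f j : (j < n)%nat -> sumR n (fun k => idm j k * f k) = f j.
Proof.
  intros Hj. rewrite (sumR_single n _ j Hj).
  - unfold idm. rewrite Nat.eqb_refl. ring.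
  - intros k _ Hk. unfold idm. destruct (Nat.eqb_spec j k); [lia|ring].
Qed.

Lemma idm_sum_r n f j : (j < n)%nat -> sumR n (fun k => f k * idm k j) = f j.
Proof.
  intros Hj. rewrite (sumR_single n _ j Hj).
  - unfold idm. rewrite Nat.eqb_refl. ring.
  - intros k _ Hk. unfold idm. destruct (Nat.eqb_spec k j); [lia|ring].
Qed.

Lemma mv_mm n M N x i : mv n (mm n M N) x i = mv n M (mv n N x) i.
Proof.
  unfold mv, mm. rewrite (sumR_ext n _ (fun k => sumR n (fun l => M i l * N l k * x k))).
  2:{ intros. rewrite <- sumR_scalr. reflexivity. }
  rewrite sumR_swap. apply sumR_ext. intros. rewrite <- sumR_scal. apply sumR_ext. intros; ring.
Qed.

Lemma mm_assoc n M N P i j : mm n (mm n M N) P i j = mm n M (mm n N P) i j.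
Proof.
  unfold mm. rewrite (sumR_ext n _ (fun k => sumR n (fun l => M i l * N l k * P k j))).
  2:{ intros. rewrite <- sumR_scalr. reflexivity. }
  rewrite sumR_swap. apply sumR_ext. intros. rewrite <- sumR_scal. apply sumR_ext. intros; ring.
Qed.

Lemma dot_sym n x y : dot n x y = dot n y x.
Proof. unfold dot. apply sumR_ext. intros; ring. Qed.

Lemma dot_tr n M x y : dot n (mv n M x) y = dot n x (mv n (tr M) y).
Proof.
  unfold dot, mv, tr. rewrite (sumR_ext n _ (fun i => sumR n (fun k => M i k * x k * y i))).
  2:{ intros. rewrite <- sumR_scalr. reflexivity. }
  rewrite sumR_swap. apply sumR_ext. intros. rewrite <- sumR_scal. apply sumR_ext. intros; ring.
Qed.

Lemma dot_ext n x x' y y' : (forall i, (i < n)%nat -> x i = x' i) -> (forall i, (i < n)%nat -> y i = y' i) ->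
  dot n x y = dot n x' y'.
Proof. intros H1 H2. unfold dot. apply sumR_ext. intros. rewrite H1, H2; auto. Qed.

Lemma mv_ext n M x x' : (forall i, (i < n)%nat -> x i = x' i) -> forall i, mv n M x i = mv n M x' i.
Proof. intros H i. unfold mv. apply sumR_ext. intros. rewrite H; auto. Qed.

Lemma dot_nonneg n x : 0 <= dot n x x.
Proof. unfold dot. apply sumR_nonneg. intros. nra. Qed.

Lemma dot_zero n x : dot n x x = 0 -> forall i, (i < n)%nat -> x i = 0.
Proof. intros H i Hi. assert (x i * x i = 0).
  { apply (sumR_pos_zero n (fun i => x i * x i)); auto. intros; nra. }
  nra. Qed.

Lemma dot_plus_l n x y z : dot n (fun i => x i + y i) z = dot n x z + dot n y z.
Proof. unfold dot. rewrite <- sumR_plus. apply sumR_ext. intros; ring. Qed.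
Lemma dot_scal_l n c x z : dot n (fun i => c * x i) z = c * dot n x z.
Proof. unfold dot. rewrite <- sumR_scal. apply sumR_ext. intros; ring. Qed.
Lemma dot_opp_l n x z : dot n (fun i => - x i) z = - dot n x z.
Proof. unfold dot. rewrite <- sumR_opp. apply sumR_ext. intros; ring. Qed.
Lemma dot_zero_l n x z : (forall i, (i<n)%nat -> x i = 0) -> dot n x z = 0.
Proof. intros H. unfold dot. apply sumR_zero. intros. rewrite H; auto; ring. Qed.

Lemma mv_plus n M x y i : mv n M (fun k => x k + y k) i = mv n M x i + mv n M y i.
Proof. unfold mv. rewrite <- sumR_plus. apply sumR_ext. intros; ring. Qed.
Lemma mv_scal n M c x i : mv n M (fun k => c * x k) i = c * mv n M x i.
Proof. unfold mv. rewrite <- sumR_scal. apply sumR_ext. intros; ring. Qed.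
Lemma mv_opp n M x i : mv n M (fun k => - x k) i = - mv n M x i.
Proof. unfold mv. rewrite <- sumR_opp. apply sumR_ext. intros; ring. Qed.
Lemma mv_idm n x i : (i < n)%nat -> mv n idm x i = x i.
Proof. intros. unfold mv. apply idm_sum; auto. Qed.

Lemma vnorm_nonneg n x : 0 <= vnorm n x.
Proof. unfold vnorm. apply sqrt_pos. Qed.

Lemma vnorm_sq n x : vnorm n x ^ 2 = dot n x x.
Proof. unfold vnorm. rewrite pow2_sqrt; auto. apply dot_nonneg. Qed.

Lemma vnorm_pos n x : (exists i, (i < n)%nat /\ x i <> 0) -> 0 < vnorm n x.
Proof.
  intros [i [Hi Hx]]. unfold vnorm. apply sqrt_lt_R0.
  destruct (dot_nonneg n x) as [H|H]; auto. exfalso. apply Hx. apply (dot_zero n x); auto.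
Qed.

Lemma vnorm_comp n x i : (i < n)%nat -> Rabs (x i) <= vnorm n x.
Proof.
  intros Hi. unfold vnorm. rewrite <- sqrt_Rsqr_abs. apply sqrt_le_1_alt.
  unfold Rsqr, dot. apply (sumR_term_le n (fun i => x i * x i) i); auto. intros; nra.
Qed.

From Stdlib Require Import Reals Lra Lia List FunctionalExtensionality ClassicalEpsilon.
From Coquelicot Require Import Coquelicot.
Open Scope R_scope.

Definition sm (D : R -> Prop) (f : R -> R) : Prop :=
  exists F : nat -> R -> R, F O = f /\ forall k t, D t -> derivable_pt_lim (F k) t (F (S k) t).

Definition isopen (D : R -> Prop) : Prop :=
  forall x, D x -> exists e, 0 < e /\ forall y, Rabs (y - x) < e -> D y.

Lemma dpl_eq f x l l' : derivable_pt_lim f x l -> l = l' -> derivable_pt_lim f x l'.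
Proof. intros H ->; exact H. Qed.

Lemma dpl_ext_loc f g x l e : 0 < e -> (forall y, Rabs (y - x) < e -> f y = g y) ->
  derivable_pt_lim f x l -> derivable_pt_lim g x l.
Proof.
  intros He Hfg H. apply is_derive_Reals. apply is_derive_Reals in H.
  apply (is_derive_ext_loc f g); auto.
  exists (mkposreal e He). intros y Hy. apply Hfg. exact Hy.
Qed.

Lemma sm_smooth_on D f : sm D f -> smooth_on D f.
Proof. intros [F [H0 H]]. exists F. split; auto. intros; subst; auto. Qed.

Lemma smooth_on_sm D f : isopen D -> smooth_on D f -> sm D f.
Proof.
  intros Ho [F [H0 H]]. exists (fun k => match k with O => f | S _ => F k end). split; auto.
  intros [|k] t Ht; [|apply H; auto].
  destruct (Ho t Ht) as [e [He He']].
  apply (dpl_ext_loc (F O) f t _ e He); auto.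
Qed.

Lemma sm_sub D D' f : sm D f -> (forall t, D' t -> D t) -> sm D' f.
Proof. intros [F [H0 H]] HD. exists F; split; auto. Qed.

Lemma sm_deriv D f : sm D f -> exists f', sm D f' /\ forall t, D t -> derivable_pt_lim f t (f' t).
Proof.
  intros [F [H0 H]]. exists (F 1%nat). split.
  - exists (fun k => F (S k)). split; auto.
  - intros t Ht. subst. apply H; auto.
Qed.

Lemma sm_dpl D f t : sm D f -> D t -> exists l, derivable_pt_lim f t l.
Proof. intros [F [H0 H]] Ht. subst. exists (F 1%nat t). apply H; auto. Qed.

Lemma sm_cont D f t : sm D f -> D t -> continuity_pt f t.
Proof. intros Hs Ht. destruct (sm_dpl D f t Hs Ht) as [l Hl].
  apply derivable_continuous_pt. exists l. exact Hl. Qed.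

Inductive ex : Type := At (F : nat -> R -> R) | Pl (a b : ex) | Ml (a b : ex) | Iv (a : ex).

Fixpoint den (e : ex) : R -> R :=
  match e with
  | At F => F O
  | Pl a b => fun t => den a t + den b t
  | Ml a b => fun t => den a t * den b t
  | Iv a => fun t => / den a t
  end.

Definition cm1 : nat -> R -> R := fun k _ => match k with O => -1 | S _ => 0 end.

Fixpoint dx (e : ex) : ex :=
  match e with
  | At F => At (fun k => F (S k))
  | Pl a b => Pl (dx a) (dx b)
  | Ml a b => Pl (Ml (dx a) b) (Ml a (dx b))
  | Iv a => Ml (Ml (At cm1) (dx a)) (Ml (Iv a) (Iv a))
  end.

Fixpoint good (D : R -> Prop) (e : ex) : Prop :=
  match e with
  | At F => forall k t, D t -> derivable_pt_lim (F k) t (F (S k) t)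
  | Pl a b => good D a /\ good D b
  | Ml a b => good D a /\ good D b
  | Iv a => good D a /\ forall t, D t -> den a t <> 0
  end.

Lemma good_cm1 D : good D (At cm1).
Proof. intros k t _. destruct k; simpl; apply derivable_pt_lim_const. Qed.

Lemma good_dx D e : good D e -> good D (dx e) /\ forall t, D t -> derivable_pt_lim (den e) t (den (dx e) t).
Proof.
  induction e; simpl.
  - intros H. split; auto.
  - intros [Ha Hb]. destruct (IHe1 Ha) as [Ha' Ha'']. destruct (IHe2 Hb) as [Hb' Hb''].
    split; auto. intros t Ht. apply (derivable_pt_lim_plus (den e1) (den e2)); auto.
  - intros [Ha Hb]. destruct (IHe1 Ha) as [Ha' Ha'']. destruct (IHe2 Hb) as [Hb' Hb''].
    split; [tauto|]. intros t Ht. apply (derivable_pt_lim_mult (den e1) (den e2)); auto.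
  - intros [Ha Hn]. destruct (IHe Ha) as [Ha' Ha'']. split.
    + split; [split; [apply good_cm1|auto]|split; split; auto].
    + intros t Ht. apply is_derive_Reals. specialize (Hn t Ht).
      match goal with |- is_derive _ _ ?l => replace l with (- den (dx e) t / den e t ^ 2) end.
      * apply is_derive_inv; [apply is_derive_Reals; apply Ha''; auto| auto].
      * unfold cm1. field. auto.
Qed.

Lemma good_sm D e : good D e -> sm D (den e).
Proof.
  intros H. exists (fun k => den (Nat.iter k dx e)). split; auto.
  intros k t Ht. simpl.
  assert (Hk : good D (Nat.iter k dx e)).
  { induction k; simpl; auto. apply good_dx; auto. }
  apply (proj2 (good_dx D _ Hk)); auto.
Qed.

Lemma sm_good D f : sm D f -> exists F, good D (At F) /\ den (At F) = f.
Proof. intros [F [H0 H]]. exists F. split; auto. Qed.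

Lemma sm_ext D f g : sm D f -> (forall t, f t = g t) -> sm D g.
Proof. intros H E. replace g with f; auto. apply functional_extensionality; auto. Qed.

Lemma sm_plus D f g : sm D f -> sm D g -> sm D (fun t => f t + g t).
Proof.
  intros Hf Hg. destruct (sm_good D f Hf) as [F [HF <-]]. destruct (sm_good D g Hg) as [G [HG <-]].
  apply (good_sm D (Pl (At F) (At G))). simpl; auto.
Qed.

Lemma sm_mult D f g : sm D f -> sm D g -> sm D (fun t => f t * g t).
Proof.
  intros Hf Hg. destruct (sm_good D f Hf) as [F [HF <-]]. destruct (sm_good D g Hg) as [G [HG <-]].
  apply (good_sm D (Ml (At F) (At G))). simpl; auto.
Qed.

Lemma sm_inv D f : sm D f -> (forall t, D t -> f t <> 0) -> sm D (fun t => / f t).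
Proof.
  intros Hf Hn. destruct (sm_good D f Hf) as [F [HF <-]].
  apply (good_sm D (Iv (At F))). simpl; auto.
Qed.

Lemma sm_const D c : sm D (fun _ => c).
Proof. exists (fun k _ => match k with O => c | S _ => 0 end). split; auto.
  intros k t _. destruct k; apply derivable_pt_lim_const. Qed.

Lemma sm_id D : sm D (fun t => t).
Proof. exists (fun k t => match k with O => t | 1%nat => 1 | _ => 0 end). split; auto.
  intros k t _. destruct k as [|[|k]]; [apply derivable_pt_lim_id|apply derivable_pt_lim_const|apply derivable_pt_lim_const]. Qed.

Lemma sm_opp D f : sm D f -> sm D (fun t => - f t).
Proof. intros H. apply (sm_ext D (fun t => (fun _ => -1) t * f t)); [apply sm_mult; auto; apply sm_const|intros; ring]. Qed.

Lemma sm_minus D f g : sm D f -> sm D g -> sm D (fun t => f t - g t).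
Proof. intros. apply (sm_ext D (fun t => f t + - g t)); [apply sm_plus; auto; apply sm_opp; auto|intros; ring]. Qed.

Lemma sm_div D f g : sm D f -> sm D g -> (forall t, D t -> g t <> 0) -> sm D (fun t => f t / g t).
Proof. intros. apply sm_mult; auto. apply sm_inv; auto. Qed.

Lemma sm_sumR D n (f : nat -> R -> R) : (forall k, (k < n)%nat -> sm D (f k)) -> sm D (fun t => sumR n (fun k => f k t)).
Proof.
  induction n; intros H.
  - apply (sm_ext D (fun _ => 0)); [apply sm_const|intros; reflexivity].
  - apply (sm_ext D (fun t => sumR n (fun k => f k t) + f n t)).
    + apply sm_plus; [apply IHn; intros; apply H; lia|apply H; lia].
    + intros; rewrite sumR_S; reflexivity.
Qed.

From Stdlib Require Import Reals Lra Lia List FunctionalExtensionality ClassicalEpsilon.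
From Coquelicot Require Import Coquelicot.
Open Scope R_scope.

Lemma interval_open I : is_open_interval I -> isopen I.
Proof. intros [_ H]. exact H. Qed.

Lemma interval_conv I a b s : is_open_interval I -> I a -> I b -> 0 <= s <= 1 -> I (a + s * (b - a)).
Proof.
  intros [Hc _] Ha Hb Hs. destruct (Rle_dec a b).
  - apply (Hc a _ b); auto. nra.
  - apply (Hc b _ a); auto. nra.
Qed.

Lemma cont_of_dpl f x l : derivable_pt_lim f x l -> continuity_pt f x.
Proof. intros H. apply derivable_continuous_pt. exists l; exact H. Qed.

Lemma cont_2d_pow k x y : continuity_2d_pt (fun _ v => v ^ k) x y.
Proof.
  induction k; simpl.
  - apply continuity_2d_pt_const.
  - apply continuity_2d_pt_mult; auto. apply continuity_2d_pt_id2.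
Qed.

Section Had.
Variables (I : R -> Prop) (ts : R) (F : nat -> R -> R).
Hypothesis HI : is_open_interval I.
Hypothesis Hts : I ts.
Hypothesis HF : forall k t, I t -> derivable_pt_lim (F k) t (F (S k) t).

Let p u v := ts + v * (u - ts).

Definition Hk (k : nat) (t : R) : R := RInt (fun s => s ^ k * F (S k) (ts + s * (t - ts))) 0 1.

Lemma p_in u v : I u -> 0 <= v <= 1 -> I (ts + v * (u - ts)).
Proof. intros; apply interval_conv; auto. Qed.

Lemma F_cont k x : I x -> continuity_pt (F k) x.
Proof. intros. eapply cont_of_dpl. apply HF; auto. Qed.

Lemma integrand_cont k u z : I u -> 0 <= z <= 1 ->
  continuous (fun s => s ^ k * F (S k) (ts + s * (u - ts))) z.
Proof.
  intros Hu Hz. apply continuity_pt_filterlim.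
  apply continuity_pt_mult.
  - apply derivable_continuous_pt. apply derivable_pt_pow.
  - apply (continuity_pt_comp (fun s => ts + s * (u - ts)) (F (S k))).
    + apply continuity_pt_plus. apply continuity_pt_const. intros ? ?; reflexivity.
      apply continuity_pt_mult. apply derivable_continuous_pt, derivable_pt_id.
      apply continuity_pt_const. intros ? ?; reflexivity.
    + apply F_cont. apply p_in; auto.
Qed.

Lemma Hk_deriv k t : I t -> derivable_pt_lim (Hk k) t (Hk (S k) t).
Proof.
  intros Ht. apply is_derive_Reals. unfold Hk.
  destruct (interval_open I HI t Ht) as [e [He HeI]].
  assert (Hder : forall u s, I u -> 0 <= s <= 1 ->
     is_derive (fun z => s ^ k * F (S k) (ts + s * (z - ts))) u (s ^ S k * F (S (S k)) (ts + s * (u - ts)))).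
  { intros u s Hu Hs. apply is_derive_Reals.
    apply (dpl_eq (fun z => s ^ k * F (S k) (ts + s * (z - ts))) u
       (s ^ k * (F (S (S k)) (ts + s * (u - ts)) * s))).
    - apply (derivable_pt_lim_mult (fun _ => s ^ k) (fun z => F (S k) (ts + s * (z - ts))) u 0 _)
      || idtac.
      apply (dpl_eq _ _ (0 * F (S k) (ts + s * (u - ts)) + s ^ k * (F (S (S k)) (ts + s * (u - ts)) * s))).
      2: ring.
      apply (derivable_pt_lim_mult (fun _ => s ^ k) (fun z => F (S k) (ts + s * (z - ts)))).
      + apply derivable_pt_lim_const.
      + apply (derivable_pt_lim_comp (fun z => ts + s * (z - ts)) (F (S k))).
        * apply (dpl_eq _ _ (0 + (0 * (u - ts) + s * (1 - 0)))); [|ring].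
          apply derivable_pt_lim_plus; [apply derivable_pt_lim_const|].
          apply (derivable_pt_lim_mult (fun _ => s) (fun z => z - ts)); [apply derivable_pt_lim_const|].
          apply derivable_pt_lim_minus; [apply derivable_pt_lim_id|apply derivable_pt_lim_const].
        * apply HF. apply p_in; auto.
    - simpl. ring. }
  evar (L : R).
  assert (HD : is_derive (fun x0 => RInt (fun s => s ^ k * F (S k) (ts + s * (x0 - ts))) 0 1) t
     (RInt (fun s => Derive (fun u => s ^ k * F (S k) (ts + s * (u - ts))) t) 0 1)).
  { apply (is_derive_RInt_param (fun u s => s ^ k * F (S k) (ts + s * (u - ts))) 0 1 t).
    - exists (mkposreal e He). intros u Hu s Hs. rewrite Rmin_left, Rmax_right in Hs by lra.
      assert (I u) by (apply HeI; exact Hu).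
      eexists. apply Hder; auto.
    - intros s Hs. rewrite Rmin_left, Rmax_right in Hs by lra.
      set (G := fun u v => v ^ S k * F (S (S k)) (ts + v * (u - ts))).
      assert (Hp2 : continuity_2d_pt (fun u v => ts + v * (u - ts)) t s).
      { apply continuity_2d_pt_plus. apply continuity_2d_pt_const.
        apply continuity_2d_pt_mult. apply continuity_2d_pt_id2.
        apply continuity_2d_pt_minus. apply continuity_2d_pt_id1. apply continuity_2d_pt_const. }
      assert (HpI : I (ts + s * (t - ts))) by (apply p_in; auto).
      destruct (interval_open I HI _ HpI) as [e2 [He2 He2I]].
      apply (continuity_2d_pt_ext_loc G).
      + destruct (Hp2 (mkposreal e2 He2)) as [d Hd].
        exists d. intros u v Hu Hv. symmetry. apply is_derive_unique.
        apply is_derive_Reals.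
        apply (dpl_eq _ _ (v ^ k * (F (S (S k)) (ts + v * (u - ts)) * v))).
        2:{ unfold G; simpl; ring. }
        apply (dpl_eq _ _ (0 * F (S k) (ts + v * (u - ts)) + v ^ k * (F (S (S k)) (ts + v * (u - ts)) * v))); [|ring].
        apply (derivable_pt_lim_mult (fun _ => v ^ k) (fun z => F (S k) (ts + v * (z - ts)))).
        * apply derivable_pt_lim_const.
        * apply (derivable_pt_lim_comp (fun z => ts + v * (z - ts)) (F (S k))).
          -- apply (dpl_eq _ _ (0 + (0 * (u - ts) + v * (1 - 0)))); [|ring].
             apply derivable_pt_lim_plus; [apply derivable_pt_lim_const|].
             apply (derivable_pt_lim_mult (fun _ => v) (fun z => z - ts)); [apply derivable_pt_lim_const|].
             apply derivable_pt_lim_minus; [apply derivable_pt_lim_id|apply derivable_pt_lim_const].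
          -- apply HF. apply He2I. apply Hd; auto.
      + unfold G. apply continuity_2d_pt_mult; [apply cont_2d_pow|].
        apply (continuity_1d_2d_pt_comp (F (S (S k))) (fun u v => ts + v * (u - ts))); auto.
        apply F_cont; auto.
    - exists (mkposreal e He). intros u Hu. apply (@ex_RInt_continuous R_CompleteNormedModule).
      intros z Hz. rewrite Rmin_left, Rmax_right in Hz by lra.
      apply integrand_cont; auto. }
  match goal with |- is_derive _ _ ?l => replace l with
    (RInt (fun s => Derive (fun u => s ^ k * F (S k) (ts + s * (u - ts))) t) 0 1) end.
  - exact HD.
  - apply RInt_ext. intros s Hs. rewrite Rmin_left, Rmax_right in Hs by lra.
    apply is_derive_unique. apply Hder; auto; lra.
  Unshelve. all: try exact 0.
Qed.

Lemma Hk0_eq t : I t -> F 0 t - F 0 ts = (t - ts) * Hk 0 t.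
Proof.
  intros Ht.
  assert (HR : is_RInt (fun s => (t - ts) * F 1 (ts + s * (t - ts))) 0 1
                 (minus (F 0 (ts + 1 * (t - ts))) (F 0 (ts + 0 * (t - ts))))).
  { apply (is_RInt_derive (fun s => F 0 (ts + s * (t - ts)))).
    - intros s Hs. rewrite Rmin_left, Rmax_right in Hs by lra. apply is_derive_Reals.
      apply (dpl_eq _ _ (F 1 (ts + s * (t - ts)) * (0 + (0 * (t - ts) + s * 0 + 1 * (t - ts))))); [|ring].
      apply (derivable_pt_lim_comp (fun s => ts + s * (t - ts)) (F 0)).
      + apply derivable_pt_lim_plus; [apply derivable_pt_lim_const|].
        apply (dpl_eq _ _ (1 * (t - ts) + s * 0)); [|ring].
        apply (derivable_pt_lim_mult (fun s => s) (fun _ => t - ts)); [apply derivable_pt_lim_id|apply derivable_pt_lim_const].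
      + apply HF. apply p_in; auto.
    - intros s Hs. rewrite Rmin_left, Rmax_right in Hs by lra.
      apply continuity_pt_filterlim. apply continuity_pt_mult. apply continuity_pt_const. intros ? ?; reflexivity.
      apply (continuity_pt_comp (fun s => ts + s * (t - ts)) (F 1)).
      + apply continuity_pt_plus. apply continuity_pt_const. intros ? ?; reflexivity.
        apply continuity_pt_mult. apply derivable_continuous_pt, derivable_pt_id.
        apply continuity_pt_const. intros ? ?; reflexivity.
      + apply F_cont. apply p_in; auto. }
  apply (is_RInt_unique (V:=R_CompleteNormedModule)) in HR.
  rewrite (RInt_scal (V:=R_CompleteNormedModule) (fun s => F 1 (ts + s * (t - ts)))) in HR.
  2:{ apply (@ex_RInt_continuous R_CompleteNormedModule). intros z Hz.
      rewrite Rmin_left, Rmax_right in Hz by lra.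
      apply (continuous_ext (fun s => s ^ 0 * F 1 (ts + s * (t - ts)))).
      intros; simpl; ring. apply (integrand_cont 0); auto. }
  unfold Hk. rewrite (RInt_ext (fun s => s ^ 0 * F 1 (ts + s * (t - ts))) (fun s => F 1 (ts + s * (t - ts)))).
  2:{ intros; simpl; ring. }
  change (scal (t - ts) (RInt (fun s => F 1 (ts + s * (t - ts))) 0 1)) with ((t - ts) * (RInt (fun s => F 1 (ts + s * (t - ts))) 0 1)) in HR.
  rewrite HR. unfold minus, plus, opp; simpl.
  replace (ts + 1 * (t - ts)) with t by ring. replace (ts + 0 * (t - ts)) with ts by ring. ring.
Qed.

End Had.

Lemma hadamard I ts f : is_open_interval I -> I ts -> sm I f -> f ts = 0 ->
  exists h, sm I h /\ (forall t, I t -> f t = (t - ts) * h t) /\ derivable_pt_lim f ts (h ts).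
Proof.
  intros HI Hts [F [H0 HF]] Hf0.
  exists (Hk ts F 0). split; [|split].
  - exists (Hk ts F). split; auto. intros k t Ht. apply (Hk_deriv I); auto.
  - intros t Ht. rewrite <- H0. rewrite <- (Hk0_eq I ts F HI Hts HF t Ht). rewrite H0, Hf0. ring.
  - assert (Hsm : sm I (Hk ts F 0)).
    { exists (Hk ts F). split; auto. intros k t Ht. apply (Hk_deriv I); auto. }
    destruct (sm_dpl I _ ts Hsm Hts) as [l Hl].
    destruct (interval_open I HI ts Hts) as [e [He HeI]].
    apply (dpl_ext_loc (fun t => (t - ts) * Hk ts F 0 t) f ts _ e He).
    + intros y Hy. assert (E := Hk0_eq I ts F HI Hts HF y (HeI y Hy)).
      rewrite H0, Hf0 in E. lra.
    + apply (dpl_eq _ _ ((1 - 0) * Hk ts F 0 ts + (ts - ts) * l)); [|ring].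
      apply (derivable_pt_lim_mult (fun t => t - ts) (Hk ts F 0)); auto.
      apply derivable_pt_lim_minus; [apply derivable_pt_lim_id|apply derivable_pt_lim_const].
Qed.

From Stdlib Require Import Reals Lra Lia List FunctionalExtensionality ClassicalEpsilon.
Open Scope R_scope.

Lemma dpl_expC C t : derivable_pt_lim (fun t => exp (C * t)) t (C * exp (C * t)).
Proof.
  apply (dpl_eq _ _ (exp (C * t) * (0 * t + C * 1))); [|ring].
  apply (derivable_pt_lim_comp (fun t => C * t) exp).
  - apply (derivable_pt_lim_mult (fun _ => C) (fun t => t)); [apply derivable_pt_lim_const|apply derivable_pt_lim_id].
  - apply derivable_pt_lim_exp.
Qed.

Lemma gron a b E E' C : a < b ->
  (forall c, a <= c <= b -> derivable_pt_lim E c (E' c)) ->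
  (forall c, a <= c <= b -> 0 <= E c) ->
  (forall c, a <= c <= b -> Rabs (E' c) <= C * E c) ->
  (E a = 0 -> E b = 0) /\ (E b = 0 -> E a = 0).
Proof.
  intros Hab Hd Hp Hb. split; intros H0.
  - set (phi := fun t => E t * exp (- C * t)).
    destruct (MVT_cor2 phi (fun t => E' t * exp (- C * t) + E t * (- C * exp (- C * t))) a b Hab) as [c [Hc1 Hc2]].
    { intros c Hc. apply (derivable_pt_lim_mult E (fun t => exp (- C * t))); auto. apply dpl_expC. }
    assert (Hn : (E' c * exp (- C * c) + E c * (- C * exp (- C * c))) <= 0).
    { assert (0 < exp (- C * c)) by apply exp_pos. specialize (Hb c (conj (Rlt_le _ _ (proj1 Hc2)) (Rlt_le _ _ (proj2 Hc2)))).
      apply Rabs_le_between in Hb || (assert (E' c <= C * E c) by (apply Rle_trans with (Rabs (E' c)); [apply Rle_abs|auto])).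
      all: nra. }
    unfold phi in Hc1. rewrite H0 in Hc1.
    assert (0 < exp (- C * b)) by apply exp_pos. assert (0 <= E b) by (apply Hp; lra).
    assert (E b * exp (- C * b) <= 0) by nra.
    nra.
  - set (phi := fun t => E t * exp (C * t)).
    destruct (MVT_cor2 phi (fun t => E' t * exp (C * t) + E t * (C * exp (C * t))) a b Hab) as [c [Hc1 Hc2]].
    { intros c Hc. apply (derivable_pt_lim_mult E (fun t => exp (C * t))); auto. apply dpl_expC. }
    assert (Hn : 0 <= (E' c * exp (C * c) + E c * (C * exp (C * c)))).
    { assert (0 < exp (C * c)) by apply exp_pos. specialize (Hb c (conj (Rlt_le _ _ (proj1 Hc2)) (Rlt_le _ _ (proj2 Hc2)))).
      assert (- (C * E c) <= E' c).
      { assert (- E' c <= Rabs (E' c)) by (rewrite <- Rabs_Ropp; apply Rle_abs). lra. }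
      nra. }
    unfold phi in Hc1. rewrite H0 in Hc1.
    assert (0 < exp (C * a)) by apply exp_pos. assert (0 <= E a) by (apply Hp; lra).
    nra.
Qed.

Lemma sumR_abs n f : Rabs (sumR n f) <= sumR n (fun k => Rabs (f k)).
Proof. induction n. rewrite !sumR_0, Rabs_R0; lra. rewrite !sumR_S.
  eapply Rle_trans; [apply Rabs_triang|]. lra. Qed.

Lemma dpl_sumR n (f : nat -> R -> R) (g : nat -> R) t :
  (forall k, (k < n)%nat -> derivable_pt_lim (f k) t (g k)) ->
  derivable_pt_lim (fun t => sumR n (fun k => f k t)) t (sumR n g).
Proof.
  induction n; intros H.
  - rewrite sumR_0. apply (dpl_ext_loc (fun _ => 0) _ t 0 1); [lra| |apply derivable_pt_lim_const].
    intros; rewrite sumR_0; reflexivity.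
  - rewrite sumR_S. apply (dpl_ext_loc (fun t => sumR n (fun k => f k t) + f n t) _ t _ 1); [lra| |].
    + intros; rewrite sumR_S; reflexivity.
    + apply (derivable_pt_lim_plus (fun t => sumR n (fun k => f k t)) (f n)).
      apply IHn; intros; apply H; lia. apply H; lia.
Qed.

Lemma cpt_ext f g x : (forall y, f y = g y) -> continuity_pt f x -> continuity_pt g x.
Proof. intros H. replace g with f; auto. apply functional_extensionality; auto. Qed.

Lemma cont_sumR n (f : nat -> R -> R) t :
  (forall k, (k < n)%nat -> continuity_pt (f k) t) ->
  continuity_pt (fun t => sumR n (fun k => f k t)) t.
Proof.
  induction n; intros H.
  - apply (cpt_ext (fun _ => 0)). intros; rewrite sumR_0; reflexivity.
    apply continuity_pt_const. intros ? ?; reflexivity.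
  - apply (cpt_ext (fun t => sumR n (fun k => f k t) + f n t)).
    intros; rewrite sumR_S; reflexivity.
    apply (continuity_pt_plus (fun t => sumR n (fun k => f k t)) (f n)).
    apply IHn; intros; apply H; lia. apply H; lia.
Qed.

Lemma energy_bound n (J J1 : nat -> R) (Rm : nat -> nat -> R) :
  Rabs (sumR n (fun i => 2 * J i * J1 i + 2 * J1 i * (- sumR n (fun l => Rm i l * J l))))
  <= (1 + sumR n (fun i => sumR n (fun l => Rabs (Rm i l)))) * sumR n (fun i => J i * J i + J1 i * J1 i).
Proof.
  set (M := sumR n (fun i => sumR n (fun l => Rabs (Rm i l)))).
  rewrite sumR_plus. eapply Rle_trans; [apply Rabs_triang|].
  assert (H1 : Rabs (sumR n (fun i => 2 * J i * J1 i)) <= sumR n (fun i => J i * J i + J1 i * J1 i)).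
  { eapply Rle_trans; [apply sumR_abs|]. apply sumR_le. intros k _.
    pose proof (Rle_0_sqr (J k + J1 k)). pose proof (Rle_0_sqr (J k - J1 k)). unfold Rsqr in *.
    apply Rabs_le; split; nra. }
  assert (H2 : Rabs (sumR n (fun i => 2 * J1 i * - sumR n (fun l => Rm i l * J l)))
     <= sumR n (fun i => sumR n (fun l => Rabs (Rm i l) * (J1 i * J1 i + J l * J l)))).
  { eapply Rle_trans; [apply sumR_abs|]. apply sumR_le. intros i _.
    replace (2 * J1 i * - sumR n (fun l => Rm i l * J l)) with (sumR n (fun l => - (2 * J1 i * Rm i l * J l))).
    2:{ rewrite sumR_opp. rewrite (sumR_ext n (fun l => 2 * J1 i * Rm i l * J l) (fun l => (2 * J1 i) * (Rm i l * J l))) by (intros; ring). rewrite sumR_scal. ring. }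
    eapply Rle_trans; [apply sumR_abs|]. apply sumR_le. intros l _.
    rewrite Rabs_Ropp. replace (2 * J1 i * Rm i l * J l) with (Rm i l * (2 * J1 i * J l)) by ring.
    rewrite Rabs_mult. apply Rmult_le_compat_l; [apply Rabs_pos|].
    pose proof (Rle_0_sqr (J1 i + J l)). pose proof (Rle_0_sqr (J1 i - J l)). unfold Rsqr in *.
    apply Rabs_le; split; nra. }
  assert (H3 : sumR n (fun i => sumR n (fun l => Rabs (Rm i l) * (J1 i * J1 i + J l * J l)))
     <= M * sumR n (fun i => J1 i * J1 i) + M * sumR n (fun l => J l * J l)).
  { rewrite (sumR_ext n _ (fun i => sumR n (fun l => Rabs (Rm i l)) * (J1 i * J1 i) + sumR n (fun l => Rabs (Rm i l) * (J l * J l)))).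
    2:{ intros. rewrite <- sumR_scalr, <- sumR_plus. apply sumR_ext. intros; ring. }
    rewrite sumR_plus. apply Rplus_le_compat.
    - rewrite <- sumR_scal. apply sumR_le. intros i Hi. apply Rmult_le_compat_r; [nra|].
      apply (sumR_term_le n (fun i => sumR n (fun l => Rabs (Rm i l))) i Hi).
      intros; apply sumR_nonneg; intros; apply Rabs_pos.
    - rewrite sumR_swap. rewrite <- sumR_scal. apply sumR_le. intros l Hl.
      rewrite sumR_scalr. apply Rmult_le_compat_r; [nra|].
      unfold M. rewrite sumR_swap.
      apply (sumR_term_le n (fun l => sumR n (fun i => Rabs (Rm i l))) l Hl).
      intros; apply sumR_nonneg; intros; apply Rabs_pos. }
  assert (HM : 0 <= M) by (apply sumR_nonneg; intros; apply sumR_nonneg; intros; apply Rabs_pos).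
  rewrite sumR_plus in *.
  assert (0 <= sumR n (fun i => J i * J i)) by (apply sumR_nonneg; intros; nra).
  assert (0 <= sumR n (fun i => J1 i * J1 i)) by (apply sumR_nonneg; intros; nra).
  fold M. nra.
Qed.

Section Jac.
Variables (n : nat) (I : R -> Prop) (Rc A Ad Add : R -> Mat).
Hypothesis HI : is_open_interval I.
Hypothesis HRc : forall i j, (i < n)%nat -> (j < n)%nat -> sm I (fun t => Rc t i j).
Hypothesis HdA : forall t i j, I t -> (i < n)%nat -> (j < n)%nat ->
     derivable_pt_lim (fun s => A s i j) t (Ad t i j).
Hypothesis HdAd : forall t i j, I t -> (i < n)%nat -> (j < n)%nat ->
     derivable_pt_lim (fun s => Ad s i j) t (Add t i j).
Hypothesis Hjac : forall t i j, I t -> (i < n)%nat -> (j < n)%nat ->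
     Add t i j + mm n (Rc t) (A t) i j = 0.

Lemma dpl_mv (M M' : R -> Mat) x t i : I t -> (i < n)%nat ->
  (forall t i j, I t -> (i < n)%nat -> (j < n)%nat -> derivable_pt_lim (fun s => M s i j) t (M' t i j)) ->
  derivable_pt_lim (fun s => mv n (M s) x i) t (mv n (M' t) x i).
Proof.
  intros Ht Hi H. unfold mv. apply (dpl_sumR n (fun k s => M s i k * x k)). intros k Hk.
  apply (dpl_eq _ _ (M' t i k * x k + M t i k * 0)); [|ring].
  apply (derivable_pt_lim_mult (fun s => M s i k) (fun _ => x k)); [apply H; auto|apply derivable_pt_lim_const].
Qed.

Lemma Add_mv x t i : I t -> (i < n)%nat ->
  mv n (Add t) x i = - sumR n (fun l => Rc t i l * mv n (A t) x l).
Proof.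
  intros Ht Hi. unfold mv at 1.
  rewrite (sumR_ext n _ (fun k => - (mm n (Rc t) (A t) i k * x k))).
  2:{ intros k Hk. specialize (Hjac t i k Ht Hi Hk). replace (Add t i k) with (- mm n (Rc t) (A t) i k) by lra. ring. }
  rewrite sumR_opp. f_equal. change (mv n (mm n (Rc t) (A t)) x i = mv n (Rc t) (mv n (A t) x) i).
  apply mv_mm.
Qed.

Lemma jac_unique x t1 t2 : I t1 -> I t2 ->
  (forall i, (i < n)%nat -> mv n (A t1) x i = 0 /\ mv n (Ad t1) x i = 0) ->
  forall i, (i < n)%nat -> mv n (A t2) x i = 0 /\ mv n (Ad t2) x i = 0.
Proof.
  intros H1 H2 H0.
  set (J := fun i t => mv n (A t) x i). set (J1 := fun i t => mv n (Ad t) x i).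
  set (E := fun t => sumR n (fun i => J i t * J i t + J1 i t * J1 i t)).
  set (E' := fun t => sumR n (fun i => 2 * J i t * J1 i t + 2 * J1 i t * (- sumR n (fun l => Rc t i l * J l t)))).
  set (Mf := fun t => sumR n (fun i => sumR n (fun l => Rabs (Rc t i l)))).
  assert (HE0 : forall t, 0 <= E t).
  { intros t. apply sumR_nonneg. intros. nra. }
  assert (HEd : forall t, I t -> derivable_pt_lim E t (E' t)).
  { intros t Ht. unfold E, E'. apply (dpl_sumR n (fun i t => J i t * J i t + J1 i t * J1 i t)).
    intros i Hi.
    assert (D1 : derivable_pt_lim (J i) t (J1 i t)) by (apply dpl_mv; auto).
    assert (D2 : derivable_pt_lim (J1 i) t (- sumR n (fun l => Rc t i l * J l t))).
    { replace (- sumR n (fun l => Rc t i l * J l t)) with (mv n (Add t) x i) by (unfold J; apply Add_mv; auto).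
      apply dpl_mv; auto. }
    apply (dpl_eq _ _ ((J1 i t * J i t + J i t * J1 i t) + ((- sumR n (fun l => Rc t i l * J l t)) * J1 i t + J1 i t * (- sumR n (fun l => Rc t i l * J l t))))); [|ring].
    apply (derivable_pt_lim_plus (fun t => J i t * J i t) (fun t => J1 i t * J1 i t)).
    + apply (derivable_pt_lim_mult (J i) (J i)); auto.
    + apply (derivable_pt_lim_mult (J1 i) (J1 i)); auto. }
  assert (HEb : forall t, Rabs (E' t) <= (1 + Mf t) * E t).
  { intros t. apply energy_bound. }
  assert (Hconv : forall c, Rmin t1 t2 <= c <= Rmax t1 t2 -> I c).
  { intros c Hc. destruct HI as [Hc' _]. unfold Rmin, Rmax in Hc. destruct (Rle_dec t1 t2).
    - apply (Hc' t1 c t2); auto. - apply (Hc' t2 c t1); auto; lra. }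
  assert (HMc : forall c, I c -> continuity_pt Mf c).
  { intros c Hc. unfold Mf. apply (cont_sumR n (fun i t => sumR n (fun l => Rabs (Rc t i l)))). intros i Hi.
    apply (cont_sumR n (fun l t => Rabs (Rc t i l))). intros l Hl.
    apply (continuity_pt_comp (fun t => Rc t i l) Rabs). eapply sm_cont; [apply HRc; auto|auto].
    apply Rcontinuity_abs. }
  assert (HE1 : E t1 = 0).
  { unfold E. apply sumR_zero. intros i Hi. destruct (H0 i Hi) as [Ha Hb]. unfold J, J1. rewrite Ha, Hb. ring. }
  assert (HE2 : E t2 = 0).
  { destruct (Req_dec t1 t2) as [<-|Hne]; auto.
    destruct (continuity_ab_maj Mf (Rmin t1 t2) (Rmax t1 t2)) as [Mx [HMx HMxr]].
    { unfold Rmin, Rmax; destruct (Rle_dec t1 t2); lra. }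
    { intros; apply HMc; apply Hconv; auto. }
    assert (Hab : Rmin t1 t2 < Rmax t1 t2) by (unfold Rmin, Rmax; destruct (Rle_dec t1 t2); lra).
    assert (HMpos : 0 <= Mf Mx) by (unfold Mf; apply sumR_nonneg; intros; apply sumR_nonneg; intros; apply Rabs_pos).
    destruct (gron (Rmin t1 t2) (Rmax t1 t2) E E' (1 + Mf Mx) Hab) as [G1 G2].
    - intros c Hc. apply HEd. apply Hconv; auto.
    - intros; auto.
    - intros c Hc. eapply Rle_trans; [apply HEb|]. apply Rmult_le_compat_r; auto. specialize (HMx c Hc). lra.
    - unfold Rmin, Rmax in *. destruct (Rle_dec t1 t2); auto. }
  intros i Hi. assert (Hz := sumR_pos_zero n _ (fun k _ => Rplus_le_le_0_compat _ _ (Rle_0_sqr (J k t2)) (Rle_0_sqr (J1 k t2))) HE2 i Hi).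
  simpl in Hz. pose proof (Rle_0_sqr (J i t2)). pose proof (Rle_0_sqr (J1 i t2)). unfold Rsqr in *.
  split; [change (J i t2 = 0)| change (J1 i t2 = 0)]; nra.
Qed.

End Jac.

From Stdlib Require Import Reals Lra Lia List FunctionalExtensionality.
Open Scope R_scope.

Module MC.
From mathcomp Require Import all_boot all_algebra.
From mathcomp Require Import Rstruct.
Import GRing.Theory.
Local Open Scope ring_scope.

Definition toM (n : nat) (M : Mat) : 'M[R]_n := \matrix_(i < n, j < n) M i j.
Definition fromM (n : nat) (B : 'M[R]_n) : Mat :=
  fun i j => match @insub _ (fun k => k < n)%N 'I_n i, @insub _ (fun k => k < n)%N 'I_n j with
             | Some i', Some j' => B i' j' | _, _ => 0 end.

Lemma fromM_E n B i j (Hi : (i < n)%N) (Hj : (j < n)%N) : fromM n B i j = B (Ordinal Hi) (Ordinal Hj).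
Proof. by rewrite /fromM (@insubT _ (fun k => (k < n)%N) 'I_n i Hi) (@insubT _ (fun k => (k < n)%N) 'I_n j Hj). Qed.

Lemma toM_fromM n B : toM n (fromM n B) = B.
Proof. apply/matrixP => i j. rewrite mxE. case: i j => [i Hi] [j Hj]. by rewrite fromM_E. Qed.

Lemma sumR_big n f : sumR n f = \sum_(i < n) f i.
Proof. elim: n => [|n IH]. by rewrite sumR_0 big_ord0. by rewrite sumR_S big_ord_recr /= IH. Qed.

Lemma mm_toM n M N i j (Hi : (i < n)%N) (Hj : (j < n)%N) :
  mm n M N i j = (toM n M *m toM n N) (Ordinal Hi) (Ordinal Hj).
Proof. rewrite mxE /mm sumR_big. apply: eq_bigr => k _. by rewrite !mxE. Qed.

Lemma idm_E n i j (Hi : (i < n)%N) (Hj : (j < n)%N) : idm i j = (1%:M : 'M[R]_n) (Ordinal Hi) (Ordinal Hj).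
Proof. rewrite mxE /idm /=. have -> : (Ordinal Hi == Ordinal Hj) = (i == j) by [].
  case: (Nat.eqb_spec i j) => [E|Hne]; first by rewrite E eqxx.
  by rewrite (introF eqP Hne). Qed.

Lemma lt_ltn i n : lt i n -> (i < n)%N.
Proof. by move/ltP. Qed.

Lemma sm_big D (I : Type) (r : seq I) (P : pred I) (F : I -> R -> R) :
  (forall i, sm D (F i)) -> sm D (fun t => \sum_(i <- r | P i) F i t).
Proof.
  move=> H. elim: r => [|a r IH].
  - apply: (sm_ext D (fun _ => 0)); first exact: sm_const. by move=> t; rewrite big_nil.
  - case HP: (P a).
    + apply: (sm_ext D (fun t => F a t + \sum_(i <- r | P i) F i t)); first exact: sm_plus.
      by move=> t; rewrite big_cons HP.
    + apply: (sm_ext D (fun t => \sum_(i <- r | P i) F i t)) => // t. by rewrite big_cons HP.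
Qed.

Lemma sm_bigprod D (I : Type) (r : seq I) (P : pred I) (F : I -> R -> R) :
  (forall i, sm D (F i)) -> sm D (fun t => \prod_(i <- r | P i) F i t).
Proof.
  move=> H. elim: r => [|a r IH].
  - apply: (sm_ext D (fun _ => 1)); first exact: sm_const. by move=> t; rewrite big_nil.
  - case HP: (P a).
    + apply: (sm_ext D (fun t => F a t * \prod_(i <- r | P i) F i t)); first exact: sm_mult.
      by move=> t; rewrite big_cons HP.
    + apply: (sm_ext D (fun t => \prod_(i <- r | P i) F i t)) => // t. by rewrite big_cons HP.
Qed.

Lemma sm_det D m (N : R -> 'M[R]_m) : (forall i j, sm D (fun t => N t i j)) -> sm D (fun t => \det (N t)).
Proof.
  move=> H. rewrite /determinant. apply: sm_big => s.
  apply: sm_mult; first exact: sm_const. apply: sm_bigprod => i. exact: H.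
Qed.

Lemma sm_adj D m (N : R -> 'M[R]_m) : (forall i j, sm D (fun t => N t i j)) -> forall i j, sm D (fun t => \adj (N t) i j).
Proof.
  move=> H i j. apply: (sm_ext D (fun t => (-1) ^+ (j + i) * \det (row' j (col' i (N t))))).
  - apply: sm_mult; first exact: sm_const. apply: sm_det => k l.
    apply: (sm_ext D (fun t => N t (lift j k) (lift i l))) => // t. by rewrite !mxE.
  - by move=> t; rewrite mxE /cofactor.
Qed.

Lemma inj_det n (M : Mat) :
  (forall x, in_ker n M x -> forall i, lt i n -> x i = 0) -> \det (toM n M) <> 0.
Proof.
  move=> H Hd. have : \det (toM n M)^T == 0 by rewrite det_tr Hd.
  case/det0P => u Hu0 HuA.
  pose x : Vec := fun k => match @insub _ (fun k => k < n)%N 'I_n k with Some k' => u 0 k' | None => 0 end.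
  have xE : forall k (Hk : (k < n)%N), x k = u 0 (Ordinal Hk).
  { move=> k Hk. by rewrite /x (@insubT _ (fun k => (k < n)%N) 'I_n k Hk). }
  have Hk : in_ker n M x.
  { move=> i /lt_ltn Hi. transitivity ((u *m (toM n M)^T) 0 (Ordinal Hi)); last first.
    { rewrite HuA mxE. reflexivity. }
    rewrite /mv sumR_big mxE.
    apply: eq_bigr => -[k Hk'] _. by rewrite xE !mxE mulrC. }
  move/eqP: Hu0; apply. apply/rowP => k. rewrite !mxE.
  case: k => k Hk'. rewrite -xE. exact: (H x Hk k (elimT ltP Hk')).
Qed.

Lemma det_adj_smooth (D : R -> Prop) n (M : R -> Mat) :
  (forall i j, lt i n -> lt j n -> sm D (fun t => M t i j)) ->
  exists (d : R -> R) (adj : R -> Mat), sm D d /\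
    (forall i j, lt i n -> lt j n -> sm D (fun t => adj t i j)) /\
    (forall t i j, lt i n -> lt j n -> mm n (M t) (adj t) i j = d t * idm i j /\ mm n (adj t) (M t) i j = d t * idm i j) /\
    (forall t, invertible n (M t) -> d t <> 0) /\
    (forall t, (forall x, in_ker n (M t) x -> forall i, lt i n -> x i = 0) -> d t <> 0).
Proof.
  move=> HM.
  have HN : forall i j : 'I_n, sm D (fun t => toM n (M t) i j).
  { move=> i j. apply: (sm_ext D (fun t => M t i j)); last by move=> t; rewrite mxE.
    apply: HM; apply/ltP; exact: ltn_ord. }
  exists (fun t => \det (toM n (M t))), (fun t => fromM n (\adj (toM n (M t)))).
  split; first exact: sm_det.
  split.
  { move=> i j /lt_ltn Hi /lt_ltn Hj.
    apply: (sm_ext D (fun t => \adj (toM n (M t)) (Ordinal Hi) (Ordinal Hj))); first exact: sm_adj.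
    by move=> t; rewrite fromM_E. }
  have Hmul : forall t i j, lt i n -> lt j n -> mm n (M t) (fromM n (\adj (toM n (M t)))) i j = \det (toM n (M t)) * idm i j /\
      mm n (fromM n (\adj (toM n (M t)))) (M t) i j = \det (toM n (M t)) * idm i j.
  { move=> t i j /lt_ltn Hi /lt_ltn Hj. rewrite !(mm_toM _ _ _ _ _ Hi Hj) (idm_E _ _ _ Hi Hj) toM_fromM.
    by rewrite mul_mx_adj mul_adj_mx !mxE mulr_natr. }
  split; first exact: Hmul.
  split; last by move=> t; apply: inj_det.
  move=> t.
  - move=> [B HB]. have E : toM n B *m toM n (M t) = 1%:M.
    { apply/matrixP => i j. case: i j => [i Hi] [j Hj]. rewrite -mm_toM -idm_E.
      by case: (HB i j (elimT ltP Hi) (elimT ltP Hj)). }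
    move=> Hd. have := congr1 determinant E. rewrite det_mulmx det1 => /eqP.
    have -> : \det (toM n (M t)) = 0 by exact: Hd.
    by rewrite mulr0 eq_sym oner_eq0.
Qed.

Lemma fromM_ord n B (i j : 'I_n) : fromM n B i j = B i j.
Proof. case: i j => [i Hi] [j Hj]. by rewrite fromM_E. Qed.

Lemma kernel_proj n (M : Mat) : exists P : Mat,
  (forall i j, lt i n -> lt j n -> mm n M P i j = 0) /\
  (forall i j, lt i n -> lt j n -> mm n P P i j = P i j) /\
  (forall x, in_ker n M x -> forall i, lt i n -> mv n P x i = x i).
Proof.
  set A := toM n M. set K := kermx A^T. set Q := proj_mx K (K^C)%MS.
  have QK : (Q <= K)%MS by rewrite -[Q]mul1mx proj_mx_sub.
  have QA : Q *m A^T = 0 by apply/sub_kermxP.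
  have QQ : Q *m Q = Q by apply: proj_mx_id; [exact: capmx_compl | exact: QK].
  exists (fromM n Q^T). split; [|split].
  - move=> i j /lt_ltn Hi /lt_ltn Hj. rewrite (mm_toM _ _ _ _ _ Hi Hj) toM_fromM.
    have -> : toM n M *m Q^T = (Q *m A^T)^T.
    { by rewrite [(Q *m _)^T]trmx_mul trmxK. }
    by rewrite QA !mxE.
  - move=> i j /lt_ltn Hi /lt_ltn Hj. rewrite (mm_toM _ _ _ _ _ Hi Hj) toM_fromM fromM_E.
    by rewrite -trmx_mul QQ.
  - move=> x Hx i /lt_ltn Hi.
    set u : 'rV[R]_n := \row_k x k.
    have uA : u *m A^T = 0.
    { apply/rowP => j. rewrite !mxE. transitivity (mv n M x j); last exact: (Hx j (elimT ltP (ltn_ord j))).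
      rewrite /mv sumR_big. apply: eq_bigr => k _. by rewrite !mxE mulrC. }
    have uK : (u <= K)%MS by apply/sub_kermxP.
    have uQ : u *m Q = u by apply: proj_mx_id; [exact: capmx_compl | exact: uK].
    have := congr1 (fun w : 'rV[R]_n => w 0 (Ordinal Hi)) uQ. rewrite /= !mxE => <-.
    rewrite /mv sumR_big. apply: eq_bigr => -[k Hk] _. by rewrite (fromM_E _ _ _ _ Hi Hk) !mxE mulrC.
Qed.

Local Close Scope ring_scope.
Local Open Scope R_scope.

Lemma kernel_proj' n (M : Mat) : exists P : Mat,
  (forall i j, lt i n -> lt j n -> mm n M P i j = 0) /\
  (forall i j, lt i n -> lt j n -> mm n P P i j = P i j) /\
  (forall x, in_ker n M x -> forall i, lt i n -> mv n P x i = x i).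
Proof. exact (kernel_proj n M). Qed.

Lemma det_adj_smooth' (D : R -> Prop) n (M : R -> Mat) :
  (forall i j, lt i n -> lt j n -> sm D (fun t => M t i j)) ->
  exists (d : R -> R) (adj : R -> Mat), sm D d /\
    (forall i j, lt i n -> lt j n -> sm D (fun t => adj t i j)) /\
    (forall t i j, lt i n -> lt j n -> mm n (M t) (adj t) i j = d t * idm i j /\ mm n (adj t) (M t) i j = d t * idm i j) /\
    (forall t, invertible n (M t) -> d t <> 0) /\
    (forall t, (forall x, in_ker n (M t) x -> forall i, lt i n -> x i = 0) -> d t <> 0).
Proof. exact (det_adj_smooth D n M). Qed.

End MC.

From Stdlib Require Import Reals Lra Lia List FunctionalExtensionality ClassicalEpsilon.
Open Scope R_scope.

Lemma mm_ext_r n M N N' i j : (forall a b, (a < n)%nat -> (b < n)%nat -> N a b = N' a b) -> (j < n)%nat ->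
  mm n M N i j = mm n M N' i j.
Proof. intros H Hj. unfold mm. apply sumR_ext. intros. rewrite H; auto. Qed.

Lemma mm_ext_l n M M' N i j : (forall a b, (a < n)%nat -> (b < n)%nat -> M a b = M' a b) -> (i < n)%nat ->
  mm n M N i j = mm n M' N i j.
Proof. intros H Hi. unfold mm. apply sumR_ext. intros. rewrite H; auto. Qed.

Lemma mm_idm_r n M i j : (j < n)%nat -> mm n M idm i j = M i j.
Proof. intros. unfold mm. apply idm_sum_r; auto. Qed.

Lemma tr_mm n M N i j : mm n (tr N) (tr M) i j = mm n M N j i.
Proof. unfold mm, tr. apply sumR_ext. intros; ring. Qed.

Lemma inv_ker n M x : invertible n M -> in_ker n M x -> forall i, (i < n)%nat -> x i = 0.
Proof.
  intros [B HB] Hx i Hi. rewrite <- (mv_idm n x i Hi).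
  unfold mv. rewrite (sumR_ext n _ (fun k => mm n B M i k * x k)).
  2:{ intros k Hk. rewrite (proj1 (HB i k Hi Hk)). reflexivity. }
  change (mv n (mm n B M) x i = 0). rewrite mv_mm. unfold mv at 1. apply sumR_zero. intros k Hk.
  rewrite Hx; auto; ring.
Qed.

Lemma cont_nz f x : continuity_pt f x -> f x <> 0 -> exists e, 0 < e /\ forall y, Rabs (y - x) < e -> f y <> 0.
Proof.
  intros Hc Hn. destruct (Hc (Rabs (f x) / 2)) as [d [Hd H]].
  { apply Rabs_pos_lt in Hn. lra. }
  exists d. split; auto. intros y Hy. destruct (Req_dec y x) as [->|Hne]; auto.
  assert (Hd' := H y (conj (conj I (not_eq_sym Hne)) Hy)). simpl in Hd'. unfold R_dist in Hd'.
  intros Hfy. rewrite Hfy in Hd'. rewrite Rminus_0_l, Rabs_Ropp in Hd'. apply Rabs_pos_lt in Hn. lra.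
Qed.

Lemma cont_bound f x : continuity_pt f x -> exists e, 0 < e /\ forall y, Rabs (y - x) < e -> Rabs (f y) <= Rabs (f x) + 1.
Proof.
  intros Hc. destruct (Hc 1) as [d [Hd H]]; [lra|].
  exists d. split; auto. intros y Hy. destruct (Req_dec y x) as [->|Hne]; [lra|].
  assert (Hd' := H y (conj (conj I (not_eq_sym Hne)) Hy)). simpl in Hd'. unfold R_dist in Hd'.
  assert (Rabs (f y) - Rabs (f x) <= Rabs (f y - f x)) by apply Rabs_triang_inv. lra.
Qed.

Lemma cont_limit_zero g x e : continuity_pt g x -> 0 < e ->
  (forall y, y <> x -> Rabs (y - x) < e -> g y = 0) -> g x = 0.
Proof.
  intros Hc He H. destruct (Req_dec (g x) 0) as [|Hn]; auto. exfalso.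
  destruct (Hc (Rabs (g x) / 2)) as [d [Hd Hd2]]. { apply Rabs_pos_lt in Hn. lra. }
  set (y := x + Rmin d e / 2).
  assert (0 < Rmin d e) by (apply Rmin_pos; auto).
  assert (Hy : Rabs (y - x) < Rmin d e). { unfold y. rewrite Rabs_right; lra. }
  assert (Hyx : y <> x) by (unfold y; lra).
  assert (Hmd := Rmin_l d e). assert (Hme := Rmin_r d e).
  assert (Hd' := Hd2 y (conj (conj I (not_eq_sym Hyx)) (Rlt_le_trans _ _ _ Hy Hmd))). simpl in Hd'. unfold R_dist in Hd'.
  rewrite (H y Hyx) in Hd' by lra. rewrite Rminus_0_l, Rabs_Ropp in Hd'. apply Rabs_pos_lt in Hn. lra.
Qed.

Lemma cont_dot n (W : R -> Vec) x : (forall i, (i < n)%nat -> continuity_pt (fun t => W t i) x) ->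
  continuity_pt (fun t => dot n (W t) (W t)) x.
Proof.
  intros H. unfold dot. apply (cont_sumR n (fun i t => W t i * W t i)). intros i Hi.
  apply (continuity_pt_mult (fun t => W t i) (fun t => W t i)); auto.
Qed.

Lemma cont_vnorm n (W : R -> Vec) x : (forall i, (i < n)%nat -> continuity_pt (fun t => W t i) x) ->
  continuity_pt (fun t => vnorm n (W t)) x.
Proof.
  intros H. unfold vnorm. apply (continuity_pt_comp (fun t => dot n (W t) (W t)) sqrt).
  apply cont_dot; auto. apply continuity_pt_sqrt. apply dot_nonneg.
Qed.

Lemma vnorm_ext n x y : (forall i, (i < n)%nat -> x i = y i) -> vnorm n x = vnorm n y.
Proof. intros H. unfold vnorm. f_equal. apply dot_ext; auto. Qed.

Lemma vnorm_pos_of n x : (exists i, (i < n)%nat /\ x i <> 0) -> 0 < vnorm n x.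
Proof. apply vnorm_pos. Qed.

Lemma sum_bound n (c : nat -> R) (w : Vec) :
  Rabs (sumR n (fun k => c k * w k)) <= sumR n (fun k => Rabs (c k)) * vnorm n w.
Proof.
  eapply Rle_trans; [apply sumR_abs|]. rewrite <- sumR_scalr. apply sumR_le. intros k Hk.
  rewrite Rabs_mult. apply Rmult_le_compat_l; [apply Rabs_pos|]. apply vnorm_comp; auto.
Qed.

Section InvPack.
Variables (n : nat) (M : R -> Mat) (d : R -> R) (adj : R -> Mat).
Hypothesis Hrel : forall t i j, (i < n)%nat -> (j < n)%nat ->
  mm n (M t) (adj t) i j = d t * idm i j /\ mm n (adj t) (M t) i j = d t * idm i j.

Lemma inv_of_d t : d t <> 0 -> invertible n (M t).
Proof.
  intros Hd. exists (fun i j => adj t i j / d t). intros i j Hi Hj.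
  destruct (Hrel t i j Hi Hj) as [H1 H2]. unfold mm in *. split.
  - rewrite (sumR_ext n _ (fun k => / d t * (adj t i k * M t k j))) by (intros; unfold Rdiv; ring).
    rewrite sumR_scal, H2. field; auto.
  - rewrite (sumR_ext n _ (fun k => / d t * (M t i k * adj t k j))) by (intros; unfold Rdiv; ring).
    rewrite sumR_scal, H1. field; auto.
Qed.

Definition Winv (v : Vec) t : Vec := fun i => sumR n (fun k => adj t k i * v k) / d t.

Lemma Winv_invstar v t : d t <> 0 -> is_invstar n (M t) v (Winv v t).
Proof.
  intros Hd i Hi. unfold mv, tr, Winv.
  rewrite (sumR_ext n _ (fun k => / d t * sumR n (fun l => adj t l k * M t k i * v l))).
  2:{ intros k Hk. unfold Rdiv. rewrite <- sumR_scalr, <- sumR_scal, <- sumR_scal. apply sumR_ext. intros; ring. }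
  rewrite sumR_scal, sumR_swap.
  rewrite (sumR_ext n _ (fun l => mm n (adj t) (M t) l i * v l)).
  2:{ intros l Hl. unfold mm. rewrite <- sumR_scalr. reflexivity. }
  rewrite (sumR_ext n _ (fun l => d t * (idm i l * v l))).
  2:{ intros l Hl. rewrite (proj2 (Hrel t l i Hl Hi)). unfold idm. rewrite Nat.eqb_sym. ring. }
  rewrite sumR_scal, idm_sum by auto. field; auto.
Qed.

Lemma invstar_unique v t w : d t <> 0 -> is_invstar n (M t) v w -> forall i, (i < n)%nat -> w i = Winv v t i.
Proof.
  intros Hd Hw i Hi. unfold Winv.
  rewrite (sumR_ext n _ (fun k => adj t k i * sumR n (fun l => M t l k * w l))).
  2:{ intros k Hk. rewrite <- (Hw k Hk). reflexivity. }
  rewrite (sumR_ext n _ (fun k => sumR n (fun l => M t l k * adj t k i * w l))).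
  2:{ intros k Hk. rewrite <- sumR_scal. apply sumR_ext; intros; ring. }
  rewrite sumR_swap.
  rewrite (sumR_ext n _ (fun l => d t * (idm l i * w l))).
  2:{ intros l Hl. transitivity (mm n (M t) (adj t) l i * w l).
      - unfold mm. rewrite <- sumR_scalr. reflexivity.
      - rewrite (proj1 (Hrel t l i Hl Hi)). ring. }
  rewrite sumR_scal.
  rewrite (sumR_ext n _ (fun l => idm i l * w l)) by (intros; unfold idm; rewrite Nat.eqb_sym; reflexivity).
  rewrite idm_sum by auto. field; auto.
Qed.

End InvPack.

From Stdlib Require Import Reals Lra Lia List FunctionalExtensionality ClassicalEpsilon.
Open Scope R_scope.

Lemma mm_plus_l n X Y Z i j : mm n (fun i j => X i j + Y i j) Z i j = mm n X Z i j + mm n Y Z i j.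
Proof. unfold mm. rewrite <- sumR_plus. apply sumR_ext; intros; ring. Qed.
Lemma mm_plus_r n X Y Z i j : mm n X (fun i j => Y i j + Z i j) i j = mm n X Y i j + mm n X Z i j.
Proof. unfold mm. rewrite <- sumR_plus. apply sumR_ext; intros; ring. Qed.
Lemma mm_scal_r n X Y s i j : mm n X (fun i j => s * Y i j) i j = s * mm n X Y i j.
Proof. unfold mm. rewrite <- sumR_scal. apply sumR_ext; intros; ring. Qed.
Lemma mm_scal_l n X Y s i j : mm n (fun i j => s * X i j) Y i j = s * mm n X Y i j.
Proof. unfold mm. rewrite <- sumR_scal. apply sumR_ext; intros; ring. Qed.
Lemma mm_minus_r n X Y Z i j : mm n X (fun i j => Y i j - Z i j) i j = mm n X Y i j - mm n X Z i j.
Proof. unfold mm. unfold Rminus. rewrite <- sumR_opp, <- sumR_plus. apply sumR_ext; intros; ring. Qed.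
Lemma mm_zero_r n X Y i j : (forall a b, (a < n)%nat -> (b < n)%nat -> Y a b = 0) -> (j < n)%nat -> mm n X Y i j = 0.
Proof. intros H Hj. unfold mm. apply sumR_zero. intros. rewrite H; auto; ring. Qed.

Section Proj.
Variables (n : nat) (P : Mat).
Hypothesis HPP : forall i j, (i < n)%nat -> (j < n)%nat -> mm n P P i j = P i j.
Definition Qm : Mat := fun i j => idm i j - P i j.

Lemma PQ0 i j : (i < n)%nat -> (j < n)%nat -> mm n P Qm i j = 0.
Proof. intros. unfold Qm. rewrite mm_minus_r, mm_idm_r, HPP by auto. ring. Qed.

Lemma QP0 i j : (i < n)%nat -> (j < n)%nat -> mm n Qm P i j = 0.
Proof. intros. unfold Qm. unfold mm. unfold Rminus.
  rewrite (sumR_ext n _ (fun k => idm i k * P k j + - (P i k * P k j))) by (intros; ring).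
  rewrite sumR_plus, sumR_opp, idm_sum by auto. change (sumR n (fun k => P i k * P k j)) with (mm n P P i j).
  rewrite HPP by auto. ring. Qed.

Lemma QQ i j : (i < n)%nat -> (j < n)%nat -> mm n Qm Qm i j = Qm i j.
Proof. intros. unfold Qm at 1. unfold mm. unfold Rminus.
  rewrite (sumR_ext n _ (fun k => idm i k * Qm k j + - (P i k * Qm k j))) by (intros; ring).
  rewrite sumR_plus, sumR_opp, idm_sum by auto. change (sumR n (fun k => P i k * Qm k j)) with (mm n P Qm i j).
  rewrite PQ0 by auto. ring. Qed.

Lemma factor (A0 H : Mat) s : s <> 0 ->
  (forall i j, (i < n)%nat -> (j < n)%nat -> mm n A0 P i j = s * H i j) ->
  forall i j, (i < n)%nat -> (j < n)%nat ->
  A0 i j = mm n (fun i j => mm n A0 Qm i j + H i j) (fun i j => s * P i j + Qm i j) i j.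
Proof.
  intros Hs HH i j Hi Hj.
  rewrite mm_plus_l, !mm_plus_r, !mm_scal_r.
  rewrite !mm_assoc.
  rewrite (mm_zero_r n A0 (mm n Qm P)) by (auto; intros; apply QP0; auto).
  rewrite (mm_ext_r n A0 (mm n Qm Qm) Qm) by (auto; intros; apply QQ; auto).
  assert (E1 : s * mm n H P i j = mm n A0 P i j).
  { rewrite <- mm_scal_l. rewrite (mm_ext_l n _ (mm n A0 P)); auto.
    - rewrite mm_assoc. apply mm_ext_r; auto.
    - intros a b Ha Hb. rewrite HH; auto. }
  assert (E2 : mm n H Qm i j = 0).
  { assert (s * mm n H Qm i j = 0).
    { rewrite <- mm_scal_l. rewrite (mm_ext_l n _ (mm n A0 P)); auto.
      - rewrite mm_assoc. apply mm_zero_r; auto. intros; apply PQ0; auto.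
      - intros a b Ha Hb. rewrite HH; auto. }
    apply Rmult_integral in H0. destruct H0; auto; contradiction. }
  rewrite E1, E2.
  transitivity (mm n A0 idm i j); [rewrite mm_idm_r; auto|].
  transitivity (mm n A0 (fun i j => P i j + Qm i j) i j).
  - apply mm_ext_r; auto. intros; unfold Qm; ring.
  - rewrite mm_plus_r. ring.
Qed.

Definition PT (y : Vec) : Vec := fun j => sumR n (fun i => P i j * y i).

Lemma PTPT y j : (j < n)%nat -> PT (PT y) j = PT y j.
Proof.
  intros Hj. unfold PT.
  rewrite (sumR_ext n _ (fun i => sumR n (fun k => P k i * P i j * y k))).
  2:{ intros i Hi. rewrite <- sumR_scal. apply sumR_ext; intros; ring. }
  rewrite sumR_swap. apply sumR_ext. intros k Hk.
  rewrite sumR_scalr. change (sumR n (fun i => P k i * P i j)) with (mm n P P k j). rewrite HPP; auto.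
Qed.

Lemma Dm_apply s y j : (j < n)%nat ->
  mv n (tr (fun i j => s * P i j + Qm i j)) y j = s * PT y j + y j - PT y j.
Proof.
  intros Hj. unfold mv, tr, PT, Qm.
  rewrite (sumR_ext n _ (fun k => s * (P k j * y k) + (idm j k * y k) + - (P k j * y k))).
  2:{ intros k Hk. unfold idm. rewrite Nat.eqb_sym. ring. }
  rewrite !sumR_plus, sumR_scal, sumR_opp, idm_sum by auto. ring.
Qed.

Lemma Dm_solve s y z : s <> 0 -> (forall j, (j < n)%nat -> mv n (tr (fun i j => s * P i j + Qm i j)) y j = z j) ->
  forall j, (j < n)%nat -> y j = z j - PT z j + PT z j / s.
Proof.
  intros Hs H j Hj.
  assert (HPz : forall j, (j < n)%nat -> PT z j = s * PT y j).
  { intros k Hk. unfold PT at 1. rewrite (sumR_ext n _ (fun i => P i k * (s * PT y i + y i - PT y i))).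
    2:{ intros i Hi. rewrite <- H, Dm_apply; auto. }
    unfold Rminus. rewrite (sumR_ext n _ (fun i => s * (P i k * PT y i) + P i k * y i + - (P i k * PT y i))) by (intros; ring).
    rewrite !sumR_plus, sumR_scal, sumR_opp. change (sumR n (fun i => P i k * PT y i)) with (PT (PT y) k).
    change (sumR n (fun i => P i k * y i)) with (PT y k). rewrite PTPT; auto. ring. }
  specialize (H j Hj). rewrite Dm_apply in H; auto. rewrite HPz; auto. rewrite <- H. field. auto.
Qed.

End Proj.

From Stdlib Require Import Reals Lra Lia List FunctionalExtensionality ClassicalEpsilon.
Open Scope R_scope.

Lemma tr_proj n P : (forall i j, (i < n)%nat -> (j < n)%nat -> mm n P P i j = P i j) ->
  forall i j, (i < n)%nat -> (j < n)%nat -> mm n (tr P) (tr P) i j = tr P i j.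
Proof. intros H i j Hi Hj. rewrite tr_mm. unfold tr. apply H; auto. Qed.

Lemma Dm_tr P s : forall i j, tr (fun i j => s * tr P i j + Qm (tr P) i j) i j = s * P i j + Qm P i j.
Proof. intros i j. unfold tr, Qm, idm. rewrite Nat.eqb_sym. reflexivity. Qed.

Lemma Dm_inj n P s x : (forall i j, (i < n)%nat -> (j < n)%nat -> mm n P P i j = P i j) -> s <> 0 ->
  (forall i, (i < n)%nat -> mv n (fun i j => s * P i j + Qm P i j) x i = 0) -> forall i, (i < n)%nat -> x i = 0.
Proof.
  intros HP Hs H i Hi.
  assert (H' := Dm_solve n (tr P) (tr_proj n P HP) s x (fun _ => 0) Hs).
  rewrite H'; auto.
  - unfold PT. rewrite sumR_zero by (intros; ring). field; auto.
  - intros j Hj. rewrite <- (H j Hj). unfold mv. apply sumR_ext. intros k Hk. rewrite Dm_tr. reflexivity.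
Qed.

Lemma mv_factor n (Am Bm Dm : Mat) x i : (i < n)%nat ->
  (forall i j, (i < n)%nat -> (j < n)%nat -> Am i j = mm n Bm Dm i j) ->
  mv n Am x i = mv n Bm (mv n Dm x) i.
Proof.
  intros Hi H. rewrite <- mv_mm. unfold mv. apply sumR_ext. intros k Hk. rewrite H; auto.
Qed.

Lemma mvtr_factor n (Am Bm Dm : Mat) w j : (j < n)%nat ->
  (forall i j, (i < n)%nat -> (j < n)%nat -> Am i j = mm n Bm Dm i j) ->
  mv n (tr Am) w j = mv n (tr Dm) (mv n (tr Bm) w) j.
Proof.
  intros Hj H. rewrite <- mv_mm. unfold mv. apply sumR_ext. intros k Hk. unfold tr at 1.
  rewrite H, <- tr_mm; auto.
Qed.

Lemma choice2 (Pr : nat -> nat -> (R -> R) -> Prop) : (forall i j, exists h, Pr i j h) ->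
  exists H : nat -> nat -> R -> R, forall i j, Pr i j (H i j).
Proof.
  intros Hex. exists (fun i j => proj1_sig (constructive_indefinite_description _ (Hex i j))).
  intros i j. exact (proj2_sig (constructive_indefinite_description _ (Hex i j))).
Qed.

Section Main.
Variables (n : nat) (I : R -> Prop) (t0 : R) (Rc A Ad Add : R -> Mat) (v : Vec).
Hypothesis HI : is_open_interval I.
Hypothesis Ht0 : I t0.
Hypothesis HRc : forall i j, (i < n)%nat -> (j < n)%nat -> sm I (fun t => Rc t i j).
Hypothesis HAs : forall i j, (i < n)%nat -> (j < n)%nat -> sm I (fun t => A t i j).
Hypothesis HdA : forall t i j, I t -> (i < n)%nat -> (j < n)%nat ->
     derivable_pt_lim (fun s => A s i j) t (Ad t i j).
Hypothesis HdAd : forall t i j, I t -> (i < n)%nat -> (j < n)%nat ->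
     derivable_pt_lim (fun s => Ad s i j) t (Add t i j).
Hypothesis Hjac : forall t i j, I t -> (i < n)%nat -> (j < n)%nat ->
     Add t i j + mm n (Rc t) (A t) i j = 0.
Hypothesis Hker0 : forall x, in_ker n (A t0) x -> in_ker n (Ad t0) x ->
     forall i, (i < n)%nat -> x i = 0.
Hypothesis Hlag : forall t x y, I t ->
     dot n (mv n (Ad t) x) (mv n (A t) y) = dot n (mv n (A t) x) (mv n (Ad t) y).
Variables (d : R -> R) (adj : R -> Mat).
Hypothesis Hrel : forall t i j, (i < n)%nat -> (j < n)%nat ->
  mm n (A t) (adj t) i j = d t * idm i j /\ mm n (adj t) (A t) i j = d t * idm i j.
Hypothesis Hinv_d : forall t, invertible n (A t) -> d t <> 0.
Hypothesis Hinj_d : forall t, (forall x, in_ker n (A t) x -> forall i, (i < n)%nat -> x i = 0) -> d t <> 0.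

Lemma ker_both t x : I t -> in_ker n (A t) x -> in_ker n (Ad t) x -> forall i, (i < n)%nat -> x i = 0.
Proof.
  intros Ht H1 H2. apply Hker0.
  - intros i Hi. apply (jac_unique n I Rc A Ad Add HI HRc HdA HdAd Hjac x t t0 Ht Ht0); auto.
  - intros i Hi. apply (jac_unique n I Rc A Ad Add HI HRc HdA HdAd Hjac x t t0 Ht Ht0); auto.
Qed.

Lemma inj_invertible t : (forall x, in_ker n (A t) x -> forall i, (i < n)%nat -> x i = 0) -> invertible n (A t).
Proof. intros H. apply (inv_of_d n A d adj Hrel). apply Hinj_d; auto. Qed.

Lemma sing_struct ts : I ts -> exists (PTv : Vec) (B : R -> Mat) (e : R), 0 < e /\
  (forall t, Rabs (t - ts) < e -> I t) /\
  (forall t, Rabs (t - ts) < e -> t <> ts -> invertible n (A t)) /\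
  (perp_ker n (A ts) v <-> forall j, (j < n)%nat -> PTv j = 0) /\
  (forall i j, (i < n)%nat -> (j < n)%nat -> sm I (fun t => B t i j)) /\
  (forall t, Rabs (t - ts) < e -> invertible n (B t)) /\
  (forall t w, Rabs (t - ts) < e -> t <> ts -> is_invstar n (A t) v w ->
       forall j, (j < n)%nat -> mv n (tr (B t)) w j = v j - PTv j + PTv j / (t - ts)) /\
  (forall t w, Rabs (t - ts) < e -> t <> ts -> (forall j, (j < n)%nat -> mv n (tr (B t)) w j = v j) ->
       (forall j, (j < n)%nat -> PTv j = 0) -> is_invstar n (A t) v w).
Proof.
  intros Hts.
  destruct (MC.kernel_proj' n (A ts)) as [P [HP1 [HP2 HP3]]].
  assert (Hh : forall i j, exists h, ((i < n)%nat -> (j < n)%nat -> sm I h /\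
            (forall t, I t -> mm n (A t) P i j = (t - ts) * h t) /\ h ts = mm n (Ad ts) P i j)).
  { intros i j. destruct (Compare_dec.lt_dec i n) as [Hi|Hi]; [destruct (Compare_dec.lt_dec j n) as [Hj|Hj]|].
    2,3: exists (fun _ => 0); intros; lia.
    assert (Hf : sm I (fun t => mm n (A t) P i j)).
    { unfold mm. apply (sm_sumR I n (fun k t => A t i k * P k j)). intros k Hk.
      apply sm_mult; [apply HAs; auto|apply sm_const]. }
    destruct (hadamard I ts (fun t => mm n (A t) P i j) HI Hts Hf (HP1 i j Hi Hj)) as [h [Hhs [Hheq Hhd]]].
    exists h. intros _ _. split; [|split]; auto.
    apply (uniqueness_limite (fun t => mm n (A t) P i j) ts); auto.
    unfold mm. apply (dpl_sumR n (fun k t => A t i k * P k j)). intros k Hk.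
    apply (dpl_eq _ _ (Ad ts i k * P k j + A ts i k * 0)); [|ring].
    apply (derivable_pt_lim_mult (fun t => A t i k) (fun _ => P k j)); [apply HdA; auto|apply derivable_pt_lim_const]. }
  destruct (choice2 _ Hh) as [H HH].
  set (B := fun t i j => mm n (A t) (Qm P) i j + H i j t).
  set (Dm := fun t => fun i j => (t - ts) * P i j + Qm P i j).
  assert (Bsm : forall i j, (i < n)%nat -> (j < n)%nat -> sm I (fun t => B t i j)).
  { intros i j Hi Hj. unfold B. apply sm_plus; [|apply HH; auto].
    unfold mm. apply (sm_sumR I n (fun k t => A t i k * Qm P k j)). intros k Hk.
    apply sm_mult; [apply HAs; auto|apply sm_const]. }
  assert (Hfac : forall t, I t -> t <> ts -> forall i j, (i < n)%nat -> (j < n)%nat -> A t i j = mm n (B t) (Dm t) i j).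
  { intros t Ht Hne. apply (factor n P HP2 (A t) (fun i j => H i j t) (t - ts)).
    - lra. - intros i j Hi Hj. apply HH; auto. }
  assert (HBts_inj : forall x, in_ker n (B ts) x -> forall i, (i < n)%nat -> x i = 0).
  { intros x Hx.
    set (y := mv n P x). set (z := mv n (Qm P) x).
    assert (Hbx : forall i, (i < n)%nat -> mv n (A ts) z i + mv n (Ad ts) y i = 0).
    { intros i Hi. rewrite <- (Hx i Hi). unfold z, y. rewrite <- !mv_mm. unfold mv. rewrite <- sumR_plus.
      apply sumR_ext. intros k Hk. unfold B. rewrite (proj2 (proj2 (HH i k Hi Hk))). ring. }
    assert (Hy : in_ker n (A ts) y).
    { intros i Hi. unfold y. rewrite <- mv_mm. unfold mv. apply sumR_zero. intros k Hk. rewrite HP1; auto. ring. }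
    assert (Hl := Hlag ts y z Hts).
    rewrite (dot_zero_l n (mv n (A ts) y)) in Hl by auto.
    assert (HAdy : in_ker n (Ad ts) y).
    { intros i0 Hi0. apply (dot_zero n (mv n (Ad ts) y)); auto. rewrite (dot_ext n (mv n (Ad ts) y) (mv n (Ad ts) y) (mv n (Ad ts) y) (fun i => - mv n (A ts) z i)).
      - rewrite dot_sym, dot_opp_l, dot_sym, Hl. ring.
      - auto.
      - intros i Hi. specialize (Hbx i Hi). lra. }
    assert (Hz : in_ker n (A ts) z).
    { intros i Hi. specialize (Hbx i Hi). rewrite HAdy in Hbx; auto. lra. }
    assert (Hy0 : forall i, (i < n)%nat -> y i = 0) by (apply (ker_both ts); auto).
    assert (Hz0 : forall i, (i < n)%nat -> z i = 0).
    { intros i Hi. rewrite <- (HP3 z Hz i Hi). unfold z. rewrite <- mv_mm. unfold mv. apply sumR_zero.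
      intros k Hk. rewrite PQ0; auto. ring. }
    intros i Hi. rewrite <- (mv_idm n x i Hi).
    transitivity (y i + z i); [|rewrite Hy0, Hz0; auto; ring].
    unfold y, z, mv. rewrite <- sumR_plus. apply sumR_ext. intros k Hk. unfold Qm. ring. }
  destruct (MC.det_adj_smooth' I n B Bsm) as [dB [adjB [HdB [HadjB [HrelB [HinvB HinjB]]]]]].
  assert (HdBts : dB ts <> 0) by (apply HinjB; auto).
  destruct (cont_nz dB ts (sm_cont I dB ts HdB Hts) HdBts) as [e1 [He1 He1']].
  destruct (interval_open I HI ts Hts) as [e2 [He2 He2']].
  exists (PT n P v), B, (Rmin e1 e2).
  assert (Hm1 := Rmin_l e1 e2). assert (Hm2 := Rmin_r e1 e2).
  assert (HIe : forall t, Rabs (t - ts) < Rmin e1 e2 -> I t) by (intros; apply He2'; lra).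
  assert (HBinv : forall t, Rabs (t - ts) < Rmin e1 e2 -> invertible n (B t)).
  { intros t Ht. apply (inv_of_d n B dB adjB HrelB). apply He1'. lra. }
  split; [apply Rmin_pos; auto|]. split; [auto|]. split; [|split; [|split; [auto|split; [auto|split]]]].
  - intros t Ht Hne. apply inj_invertible. intros x Hx.
    assert (HDx : forall i, (i < n)%nat -> mv n (Dm t) x i = 0).
    { apply (inv_ker n (B t) (mv n (Dm t) x) (HBinv t Ht)). intros i Hi.
      rewrite <- (mv_factor n (A t) (B t) (Dm t)); auto. }
    apply (Dm_inj n P (t - ts) x HP2); auto. lra.
  - split.
    + intros Hp j Hj. unfold PT. rewrite (sumR_ext n _ (fun i => v i * P i j)) by (intros; ring).
      apply (Hp (fun i => P i j)). intros i Hi. unfold mv. apply HP1; auto.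
    + intros H0 x Hx. rewrite (dot_ext n v v x (mv n P x)); auto.
      2:{ intros i Hi. rewrite HP3; auto. }
      rewrite dot_sym, dot_tr, dot_sym. apply dot_zero_l. intros i Hi. unfold mv, tr. rewrite <- (H0 i Hi). unfold PT. apply sumR_ext; intros; ring.
  - intros t w Ht Hne Hw j Hj.
    assert (Hf' : forall i j, (i < n)%nat -> (j < n)%nat -> A t i j = mm n (B t) (Dm t) i j) by (intros; apply Hfac; auto).
    assert (Hs : t - ts <> 0) by lra.
    apply (Dm_solve n P HP2 (t - ts) (mv n (tr (B t)) w) v Hs); auto.
    intros k Hk. rewrite <- (Hw k Hk). symmetry. apply (mvtr_factor n (A t) (B t) (Dm t) w k Hk Hf').
  - intros t w Ht Hne Hy H0 j Hj.
    assert (Hf' : forall i j, (i < n)%nat -> (j < n)%nat -> A t i j = mm n (B t) (Dm t) i j) by (intros; apply Hfac; auto).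
    rewrite (mvtr_factor n (A t) (B t) (Dm t) w j Hj Hf').
    unfold Dm. rewrite Dm_apply; auto.
    rewrite Hy; auto. unfold PT.
    rewrite (sumR_ext n (fun i => P i j * mv n (tr (B t)) w i) (fun i => P i j * v i)).
    2:{ intros; rewrite Hy; auto. }
    change (sumR n (fun i => P i j * v i)) with (PT n P v j). rewrite H0; auto. ring.
Qed.


Hypothesis Hd_sm : sm I d.
Hypothesis Hadj_sm : forall i j, (i < n)%nat -> (j < n)%nat -> sm I (fun t => adj t i j).

Lemma sm_agree D f g : sm D g -> (forall t, D t -> f t = g t) -> smooth_on D f.
Proof. intros [F [H0 H]] E. exists F. split; auto. intros t Ht. rewrite E, H0; auto. Qed.

Lemma sm_Winv (D : R -> Prop) (Mf : R -> Mat) (df : R -> R) (adjf : R -> Mat) i : (i < n)%nat ->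
  (forall t, D t -> I t) -> sm I df -> (forall i j, (i < n)%nat -> (j < n)%nat -> sm I (fun t => adjf t i j)) ->
  (forall t, D t -> df t <> 0) -> sm D (fun t => Winv n df adjf v t i).
Proof.
  intros Hi HD Hd Ha Hn. unfold Winv. apply sm_div; auto.
  - apply (sm_sub I); auto.
    apply (sm_sumR I n (fun k t => adjf t k i * v k)). intros k Hk. apply sm_mult; [apply Ha; auto|apply sm_const].
  - apply (sm_sub I); auto.
Qed.

Lemma partA1 : forall W : R -> Vec,
  (forall t, I t -> invertible n (A t) -> is_invstar n (A t) v (W t)) ->
  forall i, (i < n)%nat -> smooth_on (fun t => I t /\ invertible n (A t)) (fun t => W t i).
Proof.
  intros W HW i Hi. apply (sm_agree _ _ (fun t => Winv n d adj v t i)).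
  - apply (sm_Winv _ A); auto. intros t [Ht _]; auto. intros t [_ Hinv]; auto.
  - intros t [Ht Hinv]. apply (invstar_unique n A d adj Hrel); auto.
Qed.

Lemma ball_open ts e : isopen (fun t => Rabs (t - ts) < e /\ I t).
Proof.
  intros x [Hx HIx]. destruct (interval_open I HI x HIx) as [e1 [He1 H1]].
  exists (Rmin e1 (e - Rabs (x - ts))). split.
  - apply Rmin_pos; auto. lra.
  - intros y Hy. assert (Hm1 := Rmin_l e1 (e - Rabs (x - ts))). assert (Hm2 := Rmin_r e1 (e - Rabs (x - ts))).
    split.
    + replace (y - ts) with ((y - x) + (x - ts)) by ring. eapply Rle_lt_trans; [apply Rabs_triang|]. lra.
    + apply H1. lra.
Qed.

Lemma Winv_nz : (exists i, (i < n)%nat /\ v i <> 0) -> forall (M : Mat) w, is_invstar n M v w ->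
  exists i, (i < n)%nat /\ w i <> 0.
Proof.
  intros [j [Hj Hv]] M w Hw. apply Classical_Prop.NNPP. intros Hno. apply Hv. rewrite <- (Hw j Hj).
  unfold mv. apply sumR_zero. intros k Hk. destruct (Req_dec (w k) 0) as [E|E].
  - rewrite E; ring.
  - exfalso; apply Hno; exists k; auto.
Qed.

Lemma partA2 ts : I ts -> ~ invertible n (A ts) ->
  ((exists eps (U : R -> Vec), 0 < eps /\
      (forall i, (i < n)%nat ->
         smooth_on (fun t => Rabs (t - ts) < eps /\ I t) (fun t => U t i)) /\
      (forall t, Rabs (t - ts) < eps -> I t -> invertible n (A t) ->
         is_invstar n (A t) v (U t)))
   <-> perp_ker n (A ts) v).
Proof.
  intros Hts Hsing.
  destruct (sing_struct ts Hts) as [PTv [B [e [He [HIe [HC1 [Hperp [Bsm [HBinv [HC2 HC3]]]]]]]]]].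
  split.
  - intros [eps [U [Heps [HUs HUi]]]].
    assert (HAU : forall i, (i < n)%nat -> mv n (tr (A ts)) (U ts) i = v i).
    { intros i Hi.
      set (g := fun t => mv n (tr (A t)) (U t) i - v i).
      assert (Hg : continuity_pt g ts).
      { unfold g. apply continuity_pt_minus; [|apply continuity_pt_const; intros ? ?; reflexivity].
        unfold mv, tr. apply (cont_sumR n (fun k t => A t k i * U t k)). intros k Hk.
        apply (continuity_pt_mult (fun t => A t k i) (fun t => U t k)).
        - apply (sm_cont I); auto.
        - apply (sm_cont (fun t => Rabs (t - ts) < eps /\ I t)).
          + apply smooth_on_sm; [apply ball_open|apply HUs; auto].
          + split; auto. rewrite Rminus_eq_0, Rabs_R0; auto. }
      assert (Hg0 : g ts = 0).
      { apply (cont_limit_zero g ts (Rmin e eps)); auto. apply Rmin_pos; auto.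
        intros y Hne Hy. assert (Hm1 := Rmin_l e eps). assert (Hm2 := Rmin_r e eps).
        assert (HIy : I y) by (apply HIe; lra).
        unfold g. rewrite (HUi y); auto; try lra. apply HC1; auto; lra. }
      unfold g in Hg0. lra. }
    intros x Hx. rewrite (dot_ext n v (mv n (tr (A ts)) (U ts)) x x); auto.
    2:{ intros; rewrite HAU; auto. }
    rewrite dot_sym, <- dot_tr. apply dot_zero_l. auto.
  - intros Hp. assert (Hp0 := proj1 Hperp Hp).
    destruct (MC.det_adj_smooth' I n B Bsm) as [dB [adjB [HdB [HadjB [HrelB [HinvB HinjB]]]]]].
    exists e, (fun t => Winv n dB adjB v t). split; auto. split.
    + intros i Hi. apply sm_smooth_on. apply (sm_Winv _ B); auto.
      * intros t [_ Ht]; auto.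
      * intros t [Ht _]. apply HinvB, HBinv; auto.
    + intros t Ht HIt Hinv. assert (Hne : t <> ts) by (intros ->; contradiction).
      apply HC3; auto. intros j Hj. apply (Winv_invstar n B dB adjB HrelB); auto.
Qed.


Lemma perp_U ts : I ts -> ~ invertible n (A ts) -> perp_ker n (A ts) v -> (exists i, (i < n)%nat /\ v i <> 0) ->
  exists (U : R -> Vec) e, 0 < e /\ (forall t, Rabs (t - ts) < e -> I t) /\
  (forall t, Rabs (t - ts) < e -> t <> ts -> invertible n (A t)) /\
  (forall i, (i < n)%nat -> continuity_pt (fun t => U t i) ts) /\
  (forall t, Rabs (t - ts) < e -> t <> ts -> forall i, (i < n)%nat -> U t i = Winv n d adj v t i) /\
  0 < vnorm n (U ts).
Proof.
  intros Hts Hsing Hp Hv.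
  destruct (sing_struct ts Hts) as [PTv [B [e [He [HIe [HC1 [Hperp [Bsm [HBinv [HC2 HC3]]]]]]]]]].
  assert (Hp0 := proj1 Hperp Hp).
  destruct (MC.det_adj_smooth' I n B Bsm) as [dB [adjB [HdB [HadjB [HrelB [HinvB HinjB]]]]]].
  exists (fun t => Winv n dB adjB v t), e. split; auto. split; auto. split; auto. split; [|split].
  - intros i Hi. apply (sm_cont (fun t => Rabs (t - ts) < e /\ I t)).
    + apply (sm_Winv _ B); auto. intros t [_ Ht]; auto. intros t [Ht _]. apply HinvB, HBinv; auto.
    + split; auto. rewrite Rminus_diag, Rabs_R0; auto.
  - intros t Ht Hne i Hi.
    assert (Hdt : d t <> 0) by (apply Hinv_d, HC1; auto).
    assert (Hw : is_invstar n (A t) v (Winv n dB adjB v t)).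
    { apply HC3; auto. intros j Hj. apply (Winv_invstar n B dB adjB HrelB); auto. }
    exact (invstar_unique n A d adj Hrel v t _ Hdt Hw i Hi).
  - apply vnorm_pos. apply (Winv_nz Hv (B ts)). apply (Winv_invstar n B dB adjB HrelB); auto.
    apply HinvB, HBinv. rewrite Rminus_diag, Rabs_R0; auto.
Qed.

Lemma nonperp_blowup ts : I ts -> ~ perp_ker n (A ts) v ->
  exists e, 0 < e /\ (forall t, Rabs (t - ts) < e -> I t) /\
  (forall t, Rabs (t - ts) < e -> t <> ts -> invertible n (A t)) /\
  (forall M, exists delta, 0 < delta /\
     forall t w, I t -> 0 < Rabs (t - ts) < delta -> invertible n (A t) ->
       is_invstar n (A t) v w -> M < vnorm n w).
Proof.
  intros Hts Hnp.
  destruct (sing_struct ts Hts) as [PTv [B [e [He [HIe [HC1 [Hperp [Bsm [HBinv [HC2 HC3]]]]]]]]]].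
  assert (Hj : exists j, (j < n)%nat /\ PTv j <> 0).
  { apply Classical_Prop.NNPP. intros Hno. apply Hnp. apply Hperp. intros j Hj.
    destruct (Req_dec (PTv j) 0); auto. exfalso; apply Hno; exists j; auto. }
  destruct Hj as [j [Hj Hc]].
  exists e. split; auto. split; auto. split; auto.
  set (Bsum := fun t => sumR n (fun k => Rabs (B t k j))).
  assert (HBc : continuity_pt Bsum ts).
  { unfold Bsum. apply (cont_sumR n (fun k t => Rabs (B t k j))). intros k Hk.
    apply (continuity_pt_comp (fun t => B t k j) Rabs). apply (sm_cont I); auto. apply Rcontinuity_abs. }
  destruct (cont_bound Bsum ts HBc) as [e3 [He3 HB3]].
  set (Cb := Rabs (Bsum ts) + 1).
  assert (HCb : 0 < Cb) by (unfold Cb; pose proof (Rabs_pos (Bsum ts)); lra).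
  intros M.
  set (b := v j - PTv j). set (c := PTv j).
  set (K := Cb * Rabs M + Rabs b + 1).
  assert (HK : 0 < K) by (unfold K; pose proof (Rabs_pos M); pose proof (Rabs_pos b); nra).
  assert (Hcp : 0 < Rabs c) by (apply Rabs_pos_lt; auto).
  exists (Rmin (Rmin e e3) (Rabs c / K)). split.
  { apply Rmin_pos; [apply Rmin_pos; auto|]. apply Rdiv_lt_0_compat; auto. }
  intros t w Ht [Hpos Hlt] Hinv Hw.
  assert (Hm1 := Rmin_l (Rmin e e3) (Rabs c / K)). assert (Hm2 := Rmin_r (Rmin e e3) (Rabs c / K)).
  assert (Hm3 := Rmin_l e e3). assert (Hm4 := Rmin_r e e3).
  assert (Hne : t <> ts) by (intros ->; rewrite Rminus_diag, Rabs_R0 in Hpos; lra).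
  assert (Hy := HC2 t w ltac:(lra) Hne Hw j Hj). fold c b in Hy.
  assert (Hup : Rabs (mv n (tr (B t)) w j) <= Cb * vnorm n w).
  { unfold mv, tr. eapply Rle_trans; [apply (sum_bound n (fun k => B t k j) w)|].
    apply Rmult_le_compat_r; [apply vnorm_nonneg|].
    assert (Bsum t <= Rabs (Bsum t)) by apply Rle_abs.
    assert (Rabs (Bsum t) <= Rabs (Bsum ts) + 1) by (apply HB3; lra). unfold Bsum in *. unfold Cb. lra. }
  assert (HcK : Rabs c > K * Rabs (t - ts)).
  { assert (Rabs (t - ts) < Rabs c / K) by lra.
    apply (Rmult_lt_compat_l K) in H; auto. unfold Rdiv in H. rewrite <- Rmult_assoc, (Rmult_comm K (Rabs c)), Rmult_assoc, Rinv_r in H by lra. lra. }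
  assert (Hq : Rabs (c / (t - ts)) > K).
  { unfold Rdiv. rewrite Rabs_mult, Rabs_inv. 
    assert (0 < Rabs (t - ts)) by lra.
    apply (Rmult_lt_reg_r (Rabs (t - ts))); auto. rewrite Rmult_assoc, Rinv_l by lra. lra. }
  assert (Hlow : Rabs (mv n (tr (B t)) w j) >= K - Rabs b).
  { rewrite Hy. replace (v j - c + c / (t - ts)) with (c / (t - ts) + b) by (unfold b, c; ring).
    assert (Rabs (c / (t - ts)) - Rabs b <= Rabs (c / (t - ts) + b)).
    { replace (c / (t - ts)) with ((c / (t - ts) + b) - b) at 1 by ring.
      pose proof (Rabs_triang (c / (t - ts) + b) (- b)). rewrite Rabs_Ropp in H.
      replace (c / (t - ts) + b + - b) with (c / (t - ts) + b - b) in H by ring. lra. }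
    lra. }
  assert (Cb * vnorm n w > Cb * Rabs M) by (unfold K in Hlow; lra).
  assert (vnorm n w > Rabs M) by (apply (Rmult_lt_reg_l Cb); auto).
  pose proof (Rle_abs M). lra.
Qed.


Lemma Winv_pos t : (exists i, (i < n)%nat /\ v i <> 0) -> d t <> 0 -> 0 < vnorm n (Winv n d adj v t).
Proof.
  intros Hv Hd. apply vnorm_pos. apply (Winv_nz Hv (A t)). apply (Winv_invstar n A d adj Hrel); auto.
Qed.

Lemma Winv_cont t i : (i < n)%nat -> I t -> d t <> 0 -> continuity_pt (fun t => Winv n d adj v t i) t.
Proof.
  intros Hi Ht Hd. destruct (cont_nz d t (sm_cont I d t Hd_sm Ht) Hd) as [e [He He']].
  apply (sm_cont (fun y => Rabs (y - t) < e /\ I y)).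
  - apply (sm_Winv _ A); auto. intros y [_ Hy]; auto. intros y [Hy _]; auto.
  - split; auto. rewrite Rminus_diag, Rabs_R0; auto.
Qed.

Lemma partB : (exists i, (i < n)%nat /\ v i <> 0) ->
   exists G : R -> R,
     (forall t, I t -> continuity_pt G t) /\
     (forall t w, I t -> invertible n (A t) -> is_invstar n (A t) v w ->
        G t = (vnorm n v) ^ 2 / vnorm n w) /\
     (forall ts, I ts -> ~ invertible n (A ts) -> ~ perp_ker n (A ts) v ->
        G ts = 0 /\
        (forall M, exists delta, 0 < delta /\
           forall t w, I t -> 0 < Rabs (t - ts) < delta -> invertible n (A t) ->
             is_invstar n (A t) v w -> M < vnorm n w)) /\
     (forall t, I t -> (0 < G t <-> perp_ker n (A t) v)).
Proof.
  intros Hv.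
  assert (Hvv : 0 < vnorm n v) by (apply vnorm_pos; auto).
  set (vv := vnorm n v).
  assert (HUc : forall ts, exists U : R -> Vec, I ts -> ~ invertible n (A ts) -> perp_ker n (A ts) v ->
    exists e, 0 < e /\ (forall t, Rabs (t - ts) < e -> I t) /\
    (forall t, Rabs (t - ts) < e -> t <> ts -> invertible n (A t)) /\
    (forall i, (i < n)%nat -> continuity_pt (fun t => U t i) ts) /\
    (forall t, Rabs (t - ts) < e -> t <> ts -> forall i, (i < n)%nat -> U t i = Winv n d adj v t i) /\
    0 < vnorm n (U ts)).
  { intros ts. destruct (Classical_Prop.classic (I ts /\ ~ invertible n (A ts) /\ perp_ker n (A ts) v)) as [[H1 [H2 H3]]|Hno].
    - destruct (perp_U ts H1 H2 H3 Hv) as [U [e HU]]. exists U. intros _ _ _. exists e. exact HU.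
    - exists (fun _ _ => 0). intros H1 H2 H3. exfalso. apply Hno. auto. }
  set (Uc := fun ts => proj1_sig (constructive_indefinite_description _ (HUc ts))).
  assert (HUcP : forall ts, I ts -> ~ invertible n (A ts) -> perp_ker n (A ts) v ->
    exists e, 0 < e /\ (forall t, Rabs (t - ts) < e -> I t) /\
    (forall t, Rabs (t - ts) < e -> t <> ts -> invertible n (A t)) /\
    (forall i, (i < n)%nat -> continuity_pt (fun t => Uc ts t i) ts) /\
    (forall t, Rabs (t - ts) < e -> t <> ts -> forall i, (i < n)%nat -> Uc ts t i = Winv n d adj v t i) /\
    0 < vnorm n (Uc ts ts)).
  { intros ts. exact (proj2_sig (constructive_indefinite_description _ (HUc ts))). }
  set (G := fun t => if excluded_middle_informative (invertible n (A t)) then vv ^ 2 / vnorm n (Winv n d adj v t)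
                     else if excluded_middle_informative (perp_ker n (A t) v) then vv ^ 2 / vnorm n (Uc t t) else 0).
  assert (Ginv : forall t, invertible n (A t) -> G t = vv ^ 2 / vnorm n (Winv n d adj v t)).
  { intros t H. unfold G. destruct (excluded_middle_informative (invertible n (A t))); [reflexivity|contradiction]. }
  assert (Gperp : forall t, ~ invertible n (A t) -> perp_ker n (A t) v -> G t = vv ^ 2 / vnorm n (Uc t t)).
  { intros t H1 H2. unfold G. destruct (excluded_middle_informative (invertible n (A t))); [contradiction|].
    destruct (excluded_middle_informative (perp_ker n (A t) v)); [reflexivity|contradiction]. }
  assert (Gnp : forall t, ~ invertible n (A t) -> ~ perp_ker n (A t) v -> G t = 0).
  { intros t H1 H2. unfold G. destruct (excluded_middle_informative (invertible n (A t))); [contradiction|].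
    destruct (excluded_middle_informative (perp_ker n (A t) v)); [contradiction|reflexivity]. }
  assert (Hvv2 : 0 < vv ^ 2) by (unfold vv; nra).
  exists G. split; [|split; [|split]].
  -
    intros t Ht.
    destruct (Classical_Prop.classic (invertible n (A t))) as [Hinv|Hsing].
    + assert (Hd : d t <> 0) by auto.
      destruct (cont_nz d t (sm_cont I d t Hd_sm Ht) Hd) as [e1 [He1 He1']].
      destruct (interval_open I HI t Ht) as [e2 [He2 He2']].
      apply (continuity_pt_locally_ext (fun y => vv ^ 2 / vnorm n (Winv n d adj v y)) G (Rmin e1 e2) t).
      * apply Rmin_pos; auto.
      * intros y Hy. unfold Rdist in Hy. assert (Hm1 := Rmin_l e1 e2). assert (Hm2 := Rmin_r e1 e2).
        rewrite Ginv; auto. apply (inv_of_d n A d adj Hrel). apply He1'. lra.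
      * apply (continuity_pt_div (fun _ => vv ^ 2) (fun y => vnorm n (Winv n d adj v y))).
        -- apply continuity_pt_const. intros ? ?; reflexivity.
        -- apply (cont_vnorm n (fun y => Winv n d adj v y)). intros i Hi. apply Winv_cont; auto.
        -- assert (0 < vnorm n (Winv n d adj v t)) by (apply Winv_pos; auto). lra.
    + destruct (Classical_Prop.classic (perp_ker n (A t) v)) as [Hp|Hnp].
      * destruct (HUcP t Ht Hsing Hp) as [e [He [HIe [HC1 [HUcont [HUeq HUpos]]]]]].
        apply (continuity_pt_locally_ext (fun y => vv ^ 2 / vnorm n (Uc t y)) G e t); auto.
        -- intros y Hy. unfold Rdist in Hy. destruct (Req_dec y t) as [->|Hne].
           ++ rewrite Gperp; auto.
           ++ rewrite Ginv by (apply HC1; auto). f_equal. apply vnorm_ext. intros i Hi. rewrite HUeq; auto.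
        -- apply (continuity_pt_div (fun _ => vv ^ 2) (fun y => vnorm n (Uc t y))).
           ++ apply continuity_pt_const. intros ? ?; reflexivity.
           ++ apply (cont_vnorm n (fun y => Uc t y)). intros i Hi. apply HUcont; auto.
           ++ lra.
      * destruct (nonperp_blowup t Ht Hnp) as [e [He [HIe [HC1 HB]]]].
        intros eps Heps. destruct (HB (vv ^ 2 / eps)) as [delta [Hdelta Hdel]].
        exists (Rmin e delta). split; [apply Rmin_pos; auto|].
        intros x [[_ Hxt] Hx]. simpl in *. unfold R_dist in *.
        assert (Hm1 := Rmin_l e delta). assert (Hm2 := Rmin_r e delta).
        rewrite (Gnp t Hsing Hnp). rewrite Rminus_0_r.
        assert (Hinvx : invertible n (A x)) by (apply HC1; auto; lra).
        assert (HIx : I x) by (apply HIe; lra).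
        rewrite Ginv; auto.
        assert (Hd : d x <> 0) by auto.
        assert (Hw := Winv_invstar n A d adj Hrel v x Hd).
        assert (Hpos : 0 < Rabs (x - t)) by (apply Rabs_pos_lt; intro; apply Hxt; lra).
        assert (Hlt : Rabs (x - t) < delta) by lra.
        assert (Hbig := Hdel x _ HIx (conj Hpos Hlt) Hinvx Hw).
        assert (Hvn : 0 < vnorm n (Winv n d adj v x)).
        { apply Rlt_trans with (vv ^ 2 / eps); auto. apply Rdiv_lt_0_compat; auto. }
        rewrite Rabs_right.
        2:{ apply Rle_ge. apply Rlt_le. apply Rdiv_lt_0_compat; auto. }
        apply (Rmult_lt_reg_r (vnorm n (Winv n d adj v x))); auto.
        unfold Rdiv. rewrite Rmult_assoc, Rinv_l by lra. rewrite Rmult_1_r.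
        apply (Rmult_lt_compat_l eps) in Hbig; auto. unfold Rdiv in Hbig.
        rewrite <- Rmult_assoc, (Rmult_comm eps), Rmult_assoc, Rinv_r, Rmult_1_r in Hbig by lra. lra.
  - intros t w Ht Hinv Hw. rewrite Ginv; auto. f_equal. apply vnorm_ext.
    intros i Hi. symmetry. apply (invstar_unique n A d adj Hrel); auto.
  - intros ts Hts Hsing Hnp. split; [apply Gnp; auto|].
    destruct (nonperp_blowup ts Hts Hnp) as [e [He [HIe [HC1 HB]]]]. exact HB.
  - intros t Ht. destruct (Classical_Prop.classic (invertible n (A t))) as [Hinv|Hsing].
    + split; intros _.
      * intros x Hx. rewrite dot_sym. apply dot_zero_l. intros i Hi. apply (inv_ker n (A t) x); auto.
      * rewrite Ginv; auto. apply Rdiv_lt_0_compat; auto. apply Winv_pos; auto.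
    + destruct (Classical_Prop.classic (perp_ker n (A t) v)) as [Hp|Hnp].
      * split; intros _; auto. rewrite Gperp; auto.
        destruct (HUcP t Ht Hsing Hp) as [e [He [HIe [HC1 [HUcont [HUeq HUpos]]]]]].
        apply Rdiv_lt_0_compat; auto.
      * split; intros H; [|contradiction]. rewrite Gnp in H; auto. lra.
Qed.

End Main.

Theorem proposition1p3
  (n : nat) (I : R -> Prop) (t0 : R)
  (Rc : R -> Mat)            (* curvature operator R_t in a parallel frame *)
  (A Ad Add : R -> Mat)      (* Jacobi tensor A_t, A_t', A_t'' *)
  (v : Vec) :
  is_open_interval I -> I t0 ->
  (* R_t smooth and self-adjoint *)
  (forall i j, (i < n)%nat -> (j < n)%nat -> smooth_on I (fun t => Rc t i j)) ->
  (forall t i j, I t -> (i < n)%nat -> (j < n)%nat -> Rc t i j = Rc t j i) ->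
  (* A is a smooth Jacobi tensor *)
  (forall i j, (i < n)%nat -> (j < n)%nat -> smooth_on I (fun t => A t i j)) ->
  (forall t i j, I t -> (i < n)%nat -> (j < n)%nat ->
     derivable_pt_lim (fun s => A s i j) t (Ad t i j)) ->
  (forall t i j, I t -> (i < n)%nat -> (j < n)%nat ->
     derivable_pt_lim (fun s => Ad s i j) t (Add t i j)) ->
  (forall t i j, I t -> (i < n)%nat -> (j < n)%nat ->
     Add t i j + mm n (Rc t) (A t) i j = 0) ->
  (* Lagrange conditions *)
  (forall x, in_ker n (A t0) x -> in_ker n (Ad t0) x ->
     forall i, (i < n)%nat -> x i = 0) ->
  (forall t x y, I t ->
     dot n (mv n (Ad t) x) (mv n (A t) y) = dot n (mv n (A t) x) (mv n (Ad t) y)) ->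
  (* (a) *)
  ((forall W : R -> Vec,
      (forall t, I t -> invertible n (A t) -> is_invstar n (A t) v (W t)) ->
      forall i, (i < n)%nat ->
        smooth_on (fun t => I t /\ invertible n (A t)) (fun t => W t i))
   /\
   (forall ts, I ts -> ~ invertible n (A ts) ->
      ((exists eps (U : R -> Vec), 0 < eps /\
          (forall i, (i < n)%nat ->
             smooth_on (fun t => Rabs (t - ts) < eps /\ I t) (fun t => U t i)) /\
          (forall t, Rabs (t - ts) < eps -> I t -> invertible n (A t) ->
             is_invstar n (A t) v (U t)))
       <-> perp_ker n (A ts) v)))
  /\
  (* (b) *)
  ((exists i, (i < n)%nat /\ v i <> 0) ->
   exists G : R -> R,
     (forall t, I t -> continuity_pt G t) /\
     (forall t w, I t -> invertible n (A t) -> is_invstar n (A t) v w ->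
        G t = (vnorm n v) ^ 2 / vnorm n w) /\
     (forall ts, I ts -> ~ invertible n (A ts) -> ~ perp_ker n (A ts) v ->
        G ts = 0 /\
        (forall M, exists delta, 0 < delta /\
           forall t w, I t -> 0 < Rabs (t - ts) < delta -> invertible n (A t) ->
             is_invstar n (A t) v w -> M < vnorm n w)) /\
     (forall t, I t -> (0 < G t <-> perp_ker n (A t) v))).

Proof.
  intros HI Ht0 HRcs HRsym HAs HdA HdAd Hjac Hker0 Hlag.
  assert (HIo := interval_open I HI).
  assert (HRc : forall i j, (i < n)%nat -> (j < n)%nat -> sm I (fun t => Rc t i j)).
  { intros i j Hi Hj. apply smooth_on_sm; auto. }
  assert (HAsm : forall i j, (i < n)%nat -> (j < n)%nat -> sm I (fun t => A t i j)).
  { intros i j Hi Hj. apply smooth_on_sm; auto. }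
  destruct (MC.det_adj_smooth' I n A HAsm) as [d [adj [Hd_sm [Hadj_sm [Hrel [Hinv_d Hinj_d]]]]]].
  split.
  { split.
    { intros W HW i Hi. apply (partA1 n I A v d adj Hrel Hinv_d Hd_sm Hadj_sm); auto. }
    { intros ts Hts Hsing. apply (partA2 n I t0 Rc A Ad Add v HI Ht0 HRc HAsm HdA HdAd Hjac Hker0 Hlag d adj Hrel Hinj_d); auto. } }
  { intros Hv. apply (partB n I t0 Rc A Ad Add v HI Ht0 HRc HAsm HdA HdAd Hjac Hker0 Hlag d adj Hrel Hinv_d Hinj_d Hd_sm Hadj_sm Hv). }
Qed.
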